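(* Let $\mathcal X=\{1,\dots,k\}$ and let $G$ be a generator matrix on $\mathcal X$ with no zero entries; let $\mu$ be its unique stochastic vector with $\mu^tG=0$. Let $M\in\mathbb N$ be such that $I+G/n$ is non-negative for $n>M$, $K_n=I+\frac Gn\mathbb 1(n>M)$, let $\mathbf T$ be the inhomogeneous Markov chain with kernels $\{K_n\}$ (from time $n$ to $n+1$), and let $\nu=\langle\nu_1,\dots,\nu_k\rangle$ be the distributional limit of $\langle\frac1n\sum_{j=1}^n\delta_{T_j}(i)\rangle_{i\in\mathcal X}$. Let $\tilde K_j=(I-G/j)^{-1}$ for $j\ge1$ and let $\mathbf Z$ be the inhomogeneous Markov chain with initial distribution $\mu$ and kernels $\{\tilde K_n\}_{n\ge1}$. Then $\tilde K_n=K_n+O(n^{-2})$, and $$\nu\overset d=\lim_{n\to\infty}\frac1n\Big\langle\sum_{j=1}^n\delta_{Z_j}(i)\Big\rangle_{i\in\mathcal X}.$$ Moreover, for $\mathbf m=(m_1,\dots,m_k)\in\mathbb N_0^k$ with $N=\sum_im_i>0$, $$\mathbb E\Big[\prod_{i=1}^k\nu_i^{m_i}\Big]=\binom{N}{m_1,\dots,m_k}^{-1}\mathbb P\Big(\sum_{j=1}^N\mathbb 1(Z_j=i)=m_i,\ 1\le i\le k\Big),$$ and in particular $\mathbb E[\nu_i^N]=\mathbb P(Z_1=\dots=Z_N=i)$.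
   Context: A generator matrix: $G_{i,j}\ge0$ for $i\ne j$ and $G_{i,i}=-\sum_{j\ne i}G_{i,j}$. For each $j\ge1$, $(I-G/j)^{-1}$ exists and is a stochastic matrix. The limit law $\nu$ does not depend on the initial distribution of $\mathbf T$. *)

(* Defs.v *)
(* classical reals. States are 0..k-1 (paper's 1..k). *)
From Stdlib Require Import Reals List Arith.
Open Scope R_scope.

Definition vec := nat -> R.
Definition mat := nat -> nat -> R.

Fixpoint rsum (n : nat) (f : nat -> R) : R :=
  match n with O => 0 | S n' => rsum n' f + f n' end.
Fixpoint rprod (n : nat) (f : nat -> R) : R :=
  match n with O => 1 | S n' => rprod n' f * f n' end.

Definition is_generator (k : nat) (G : mat) : Prop :=
  (forall i j, (i < k)%nat -> (j < k)%nat -> i <> j -> 0 <= G i j) /\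
  (forall i, (i < k)%nat ->
     G i i = - rsum k (fun j => if Nat.eqb j i then 0 else G i j)).

Definition stochastic_vec (k : nat) (p : vec) : Prop :=
  (forall i, (i < k)%nat -> 0 <= p i) /\ rsum k p = 1.

Definition idm : mat := fun i j => if Nat.eqb i j then 1 else 0.
Definition mmul (k : nat) (A B : mat) : mat :=
  fun i j => rsum k (fun l => A i l * B l j).

Definition Kker (G : mat) (M : nat) : nat -> mat :=
  fun n i j => idm i j + (if Nat.ltb M n then G i j / INR n else 0).

Fixpoint paths (k n : nat) : list (list nat) :=
  match n with
  | O => nil :: nil
  | S n' => flat_map (fun x => map (cons x) (paths k n')) (seq 0 k)
  end.

(* product of transition probabilities, kernel K j used from time j to j+1 *)
Fixpoint trans (K : nat -> mat) (j x : nat) (r : list nat) : R :=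
  match r with
  | nil => 1
  | y :: r' => K j x y * trans K (S j) y r'
  end.

(* P(X_1 = x_1, ..., X_n = x_n) for chain with initial law p0 (of X_1)
   and kernels K_1, K_2, ... *)
Definition pathprob (p0 : vec) (K : nat -> mat) (p : list nat) : R :=
  match p with
  | nil => 1
  | x :: r => p0 x * trans K 1%nat x r
  end.

Definition lsum (l : list R) : R := fold_right Rplus 0 l.

Definition visits (p : list nat) (i : nat) : nat := count_occ Nat.eq_dec p i.

Definition occ (n : nat) (p : list nat) : vec :=
  fun i => INR (visits p i) / INR n.

Definition Eocc (k : nat) (p0 : vec) (K : nat -> mat) (f : vec -> R) (n : nat) : R :=
  lsum (map (fun p => pathprob p0 K p * f (occ n p)) (paths k n)).

Definition Pevent (k : nat) (p0 : vec) (K : nat -> mat) (N : nat)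
  (P : list nat -> bool) : R :=
  lsum (map (fun p => if P p then pathprob p0 K p else 0) (paths k N)).

Definition continuous_k (k : nat) (f : vec -> R) : Prop :=
  forall x eps, 0 < eps -> exists delta, 0 < delta /\
    forall y, (forall i, (i < k)%nat -> Rabs (y i - x i) < delta) ->
      Rabs (f y - f x) < eps.

Definition monomial (k : nat) (m : nat -> nat) : vec -> R :=
  fun x => rprod k (fun i => x i ^ m i).

(* Main.v *)
Require Import Defs.
From Stdlib Require Import Reals List Arith Lra Lia Classical ClassicalEpsilon FunctionalExtensionality.
Open Scope R_scope.

Lemma rsum_ext n f g : (forall i, (i < n)%nat -> f i = g i) -> rsum n f = rsum n g.
Proof. induction n; simpl; intros H; auto. rewrite IHn by (intros; apply H; lia). rewrite H by lia. auto. Qed.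

Lemma rprod_ext n f g : (forall i, (i < n)%nat -> f i = g i) -> rprod n f = rprod n g.
Proof. induction n; simpl; intros H; auto. rewrite IHn by (intros; apply H; lia). rewrite H by lia. auto. Qed.

Lemma rsum_plus n f g : rsum n (fun i => f i + g i) = rsum n f + rsum n g.
Proof. induction n; simpl; [lra|rewrite IHn; lra]. Qed.

Lemma rsum_minus n f g : rsum n (fun i => f i - g i) = rsum n f - rsum n g.
Proof. induction n; simpl; [lra|rewrite IHn; lra]. Qed.

Lemma rsum_scal n c f : rsum n (fun i => c * f i) = c * rsum n f.
Proof. induction n; simpl; [lra|rewrite IHn; lra]. Qed.

Lemma rsum_scal_r n c f : rsum n (fun i => f i * c) = rsum n f * c.
Proof. induction n; simpl; [lra|rewrite IHn; lra]. Qed.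

Lemma rsum_0 n : rsum n (fun _ => 0) = 0.
Proof. induction n; simpl; [lra|rewrite IHn; lra]. Qed.

Lemma rsum_const n c : rsum n (fun _ => c) = INR n * c.
Proof. induction n; simpl rsum; [simpl; lra|rewrite IHn, S_INR; lra]. Qed.

Lemma rsum_le n f g : (forall i, (i < n)%nat -> f i <= g i) -> rsum n f <= rsum n g.
Proof. induction n; simpl; intros H; [lra|]. assert (f n <= g n) by (apply H; lia).
  assert (rsum n f <= rsum n g) by (apply IHn; intros; apply H; lia). lra. Qed.

Lemma rsum_nonneg n f : (forall i, (i < n)%nat -> 0 <= f i) -> 0 <= rsum n f.
Proof. intros H. rewrite <- (rsum_0 n). apply rsum_le; auto. Qed.

Lemma rsum_abs n f : Rabs (rsum n f) <= rsum n (fun i => Rabs (f i)).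
Proof. induction n; simpl. rewrite Rabs_R0; lra.
  eapply Rle_trans; [apply Rabs_triang|lra]. Qed.

Lemma rsum_swap n m f : rsum n (fun i => rsum m (fun j => f i j)) = rsum m (fun j => rsum n (fun i => f i j)).
Proof. induction n; simpl. rewrite rsum_0; auto. rewrite IHn, <- rsum_plus. auto. Qed.

Lemma rsum_ind n y a : (y < n)%nat -> rsum n (fun x => if Nat.eqb x y then a x else 0) = a y.
Proof. induction n; intros H; [lia|]. simpl. destruct (Nat.eq_dec y n).
  - subst. rewrite Nat.eqb_refl. rewrite (rsum_ext _ _ (fun _ => 0)). rewrite rsum_0; lra.
    intros i Hi. destruct (Nat.eqb_spec i n); [lia|auto].
  - rewrite IHn by lia. destruct (Nat.eqb_spec n y); [lia|lra]. Qed.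

Lemma rsum_ind' n y a : (y < n)%nat -> rsum n (fun x => if Nat.eqb y x then a x else 0) = a y.
Proof. intros H. rewrite <- (rsum_ind n y a H). apply rsum_ext. intros i _. rewrite Nat.eqb_sym; auto. Qed.

Lemma rsum_drop n y g : (y < n)%nat -> rsum n (fun j => if Nat.eqb j y then 0 else g j) = rsum n g - g y.
Proof. intros H. rewrite <- (rsum_ind n y g H). rewrite <- rsum_minus. apply rsum_ext. intros i _.
  destruct (Nat.eqb i y); lra. Qed.

Lemma rsum_max n f : exists B, forall i, (i < n)%nat -> f i <= B.
Proof. induction n. exists 0; intros; lia. destruct IHn as [B HB]. exists (Rmax B (f n)).
  intros i Hi. destruct (Nat.eq_dec i n). subst; apply Rmax_r. eapply Rle_trans; [apply HB; lia|apply Rmax_l]. Qed.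

Lemma rsum_min_pos n f : (forall i, (i < n)%nat -> 0 < f i) -> exists g, 0 < g /\ forall i, (i < n)%nat -> g <= f i.
Proof. induction n; intros H. exists 1; split; [lra| intros; lia].
  destruct IHn as [g [Hg H2]]. intros; apply H; lia. exists (Rmin g (f n)). split.
  apply Rmin_pos; auto. intros i Hi. destruct (Nat.eq_dec i n). subst; apply Rmin_r.
  eapply Rle_trans; [apply Rmin_l|apply H2; lia]. Qed.

Lemma lsum_app l1 l2 : lsum (l1 ++ l2) = lsum l1 + lsum l2.
Proof. induction l1; simpl; [lra|rewrite IHl1; lra]. Qed.

Lemma lsum_map_ext {A} (l : list A) f g : (forall x, In x l -> f x = g x) -> lsum (map f l) = lsum (map g l).
Proof. induction l; simpl; intros H; auto. rewrite H by auto. rewrite IHl; auto. Qed.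

Lemma lsum_map_plus {A} (l : list A) f g : lsum (map (fun x => f x + g x) l) = lsum (map f l) + lsum (map g l).
Proof. induction l; simpl; [lra|rewrite IHl; lra]. Qed.

Lemma lsum_map_minus {A} (l : list A) f g : lsum (map (fun x => f x - g x) l) = lsum (map f l) - lsum (map g l).
Proof. induction l; simpl; [lra|rewrite IHl; lra]. Qed.

Lemma lsum_map_scal {A} (l : list A) c f : lsum (map (fun x => c * f x) l) = c * lsum (map f l).
Proof. induction l; simpl; [lra|rewrite IHl; lra]. Qed.

Lemma lsum_map_le {A} (l : list A) f g : (forall x, In x l -> f x <= g x) -> lsum (map f l) <= lsum (map g l).
Proof. induction l; simpl; intros H; [lra|]. assert (f a <= g a) by auto.
  assert (lsum (map f l) <= lsum (map g l)) by auto. lra. Qed.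

Lemma lsum_map_abs {A} (l : list A) f : Rabs (lsum (map f l)) <= lsum (map (fun x => Rabs (f x)) l).
Proof. induction l; simpl. rewrite Rabs_R0; lra. eapply Rle_trans; [apply Rabs_triang|lra]. Qed.

Lemma lsum_map_rsum {A} (l : list A) n f : lsum (map (fun x => rsum n (fun i => f x i)) l) = rsum n (fun i => lsum (map (fun x => f x i) l)).
Proof. induction l; simpl. rewrite rsum_0; auto. rewrite IHl, <- rsum_plus. auto. Qed.

Lemma lsum_seq k f : lsum (map f (seq 0 k)) = rsum k f.
Proof. induction k; auto. rewrite seq_S, map_app, lsum_app, IHk. simpl. lra. Qed.

Lemma lsum_flat_map {A B} (l : list A) (g : A -> list B) f :
  lsum (map f (flat_map g l)) = lsum (map (fun a => lsum (map f (g a))) l).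
Proof. induction l; simpl; auto. rewrite map_app, lsum_app, IHl. auto. Qed.

Lemma lsum_paths_S k n F : lsum (map F (paths k (S n))) = rsum k (fun x => lsum (map (fun r => F (x :: r)) (paths k n))).
Proof. simpl. rewrite lsum_flat_map, <- lsum_seq. apply lsum_map_ext. intros x _. rewrite map_map. auto. Qed.

Lemma lsum_paths_app k a b F : lsum (map F (paths k (a + b))) =
  lsum (map (fun p => lsum (map (fun r => F (p ++ r)) (paths k b))) (paths k a)).
Proof. revert F; induction a; intros F; simpl plus.
  simpl. rewrite Rplus_0_r. auto. rewrite !lsum_paths_S. apply rsum_ext. intros x _. rewrite IHa. auto. Qed.

Lemma paths_in k n p : In p (paths k n) -> length p = n /\ forall x, In x p -> (x < k)%nat.
Proof. revert p; induction n; simpl; intros p H.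
  destruct H as [H|[]]; subst; simpl; split; auto; intros x [].
  apply in_flat_map in H. destruct H as [x [Hx H]]. apply in_map_iff in H. destruct H as [r [E Hr]].
  subst. apply IHn in Hr. destruct Hr as [H1 H2]. apply in_seq in Hx. simpl; split; auto.
  intros y [E|Hy]; [lia|auto]. Qed.

Lemma lsum_paths_1 k F : lsum (map F (paths k 1)) = rsum k (fun x => F (x :: nil)).
Proof. rewrite lsum_paths_S. apply rsum_ext; intros. simpl. lra. Qed.

Lemma rsum_term_le n f j : (forall i, (i < n)%nat -> 0 <= f i) -> (j < n)%nat -> f j <= rsum n f.
Proof. induction n; intros H Hj; [lia|]. simpl. destruct (Nat.eq_dec j n).
  subst. pose proof (rsum_nonneg n f ltac:(intros; apply H; lia)). lra.
  pose proof (IHn ltac:(intros; apply H; lia) ltac:(lia)). pose proof (H n ltac:(lia)). lra. Qed.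

Lemma Rabs_bnd a b : Rabs a <= b -> - b <= a <= b.
Proof. intros H. pose proof (Rle_abs a). pose proof (Rle_abs (- a)). rewrite Rabs_Ropp in H1. lra. Qed.

Definition Ex (k : nat) (q : vec) (L : nat -> mat) (n : nat) (F : list nat -> R) : R :=
  lsum (map (fun p => pathprob q L p * F p) (paths k n)).

Definition stoch (k : nat) (A : mat) : Prop :=
  (forall i j, (i < k)%nat -> (j < k)%nat -> 0 <= A i j) /\
  (forall i, (i < k)%nat -> rsum k (A i) = 1).

Definition goodL k (L : nat -> mat) := forall n, (1 <= n)%nat -> stoch k (L n).

Lemma last_irrel {A} (l : list A) (a d d' : A) : last (a :: l) d = last (a :: l) d'.
Proof. revert a; induction l as [|b l IH]; intros a; simpl; auto. specialize (IH b). simpl in IH. destruct l; auto. Qed.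

Lemma last_cons_d {A} (l : list A) (x d : A) : last (x :: l) d = last l x.
Proof. destruct l as [|b l]; simpl; auto. apply (last_irrel l b d x). Qed.

Lemma trans_app L j x r1 r2 : trans L j x (r1 ++ r2) = trans L j x r1 * trans L (j + length r1) (last r1 x) r2.
Proof. revert j x; induction r1 as [|y r1 IH]; intros j x; cbn [app trans length].
  rewrite Nat.add_0_r; simpl; lra. rewrite IH. rewrite (last_cons_d r1 y x).
  replace (j + S (length r1))%nat with (S j + length r1)%nat by lia. lra. Qed.




Lemma pathprob_app q L p r : p <> nil -> pathprob q L (p ++ r) = pathprob q L p * trans L (length p) (last p 0%nat) r.
Proof. destruct p as [|x p']; intros H; [congruence|]. cbn [pathprob app length]. rewrite trans_app, last_cons_d.
  replace (1 + length p')%nat with (S (length p')) by lia. lra. Qed.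

Lemma Ex_split k q L a b F : (1 <= a)%nat ->
  Ex k q L (a + b) F = Ex k q L a (fun p => lsum (map (fun r => trans L a (last p 0%nat) r * F (p ++ r)) (paths k b))).
Proof. intros Ha. unfold Ex. rewrite lsum_paths_app. apply lsum_map_ext. intros p Hp.
  apply paths_in in Hp. destruct Hp as [Hl _]. assert (p <> nil) by (intro E; rewrite E in Hl; simpl in Hl; lia).
  rewrite <- lsum_map_scal. apply lsum_map_ext. intros r _. rewrite pathprob_app by auto. rewrite Hl. lra. Qed.

Lemma Ex_snoc k q L n F : (1 <= n)%nat ->
  Ex k q L (S n) F = Ex k q L n (fun p => rsum k (fun y => L n (last p 0%nat) y * F (p ++ y :: nil))).
Proof. intros Hn. replace (S n) with (n + 1)%nat by lia. rewrite Ex_split by auto.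
  unfold Ex. apply lsum_map_ext. intros p _. f_equal. rewrite lsum_paths_1. apply rsum_ext. intros; simpl; lra. Qed.

Lemma Ex_front k q L n F : Ex k q L (S n) F = rsum k (fun x => q x * lsum (map (fun r => trans L 1 x r * F (x :: r)) (paths k n))).
Proof. unfold Ex. rewrite lsum_paths_S. apply rsum_ext. intros x _. rewrite <- lsum_map_scal. apply lsum_map_ext.
  intros; simpl; lra. Qed.

Lemma Ex_ext k q L n F G : (forall p, In p (paths k n) -> F p = G p) -> Ex k q L n F = Ex k q L n G.
Proof. intros H. unfold Ex. apply lsum_map_ext. intros p Hp. rewrite H; auto. Qed.

Lemma Ex_plus k q L n F G : Ex k q L n (fun p => F p + G p) = Ex k q L n F + Ex k q L n G.
Proof. unfold Ex. rewrite <- lsum_map_plus. apply lsum_map_ext. intros; lra. Qed.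

Lemma Ex_minus k q L n F G : Ex k q L n (fun p => F p - G p) = Ex k q L n F - Ex k q L n G.
Proof. unfold Ex. rewrite <- lsum_map_minus. apply lsum_map_ext. intros; lra. Qed.

Lemma Ex_scal k q L n c F : Ex k q L n (fun p => c * F p) = c * Ex k q L n F.
Proof. unfold Ex. rewrite <- lsum_map_scal. apply lsum_map_ext. intros; lra. Qed.

Lemma Ex_rsum k q L n m F : Ex k q L n (fun p => rsum m (fun i => F p i)) = rsum m (fun i => Ex k q L n (fun p => F p i)).
Proof. unfold Ex. rewrite <- lsum_map_rsum. apply lsum_map_ext. intros. rewrite <- rsum_scal. auto. Qed.

Lemma trans_nonneg k L j x r : goodL k L -> (1 <= j)%nat -> (x < k)%nat -> (forall y, In y r -> (y < k)%nat) -> 0 <= trans L j x r.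
Proof. intros HL. revert j x; induction r as [|y r IH]; intros j x Hj Hx Hr; simpl. lra.
  apply Rmult_le_pos. apply (HL j Hj); auto. apply Hr; simpl; auto. apply IH; auto; try lia. apply Hr; simpl; auto. intros; apply Hr; simpl; auto. Qed.

Lemma trans_sum k L j x b : goodL k L -> (1 <= j)%nat -> (x < k)%nat -> lsum (map (fun r => trans L j x r) (paths k b)) = 1.
Proof. intros HL. revert j x; induction b; intros j x Hj Hx. simpl; lra.
  rewrite lsum_paths_S. simpl trans. rewrite (rsum_ext _ _ (fun y => L j x y * 1)). rewrite rsum_scal_r.
  rewrite (proj2 (HL j Hj) x Hx); lra. intros y Hy. rewrite lsum_map_scal. rewrite IHb; auto; lia. Qed.

Lemma pathprob_nonneg k q L p n : goodL k L -> stochastic_vec k q -> In p (paths k n) -> 0 <= pathprob q L p.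
Proof. intros HL Hq Hp. apply paths_in in Hp. destruct Hp as [_ Hp]. destruct p as [|x r]; simpl. lra.
  apply Rmult_le_pos. apply Hq. apply Hp; simpl; auto. apply trans_nonneg with k; auto. apply Hp; simpl; auto.
  intros; apply Hp; simpl; auto. Qed.

Lemma Ex_one k q L n : goodL k L -> stochastic_vec k q -> Ex k q L n (fun _ => 1) = 1.
Proof. intros HL Hq. destruct n. unfold Ex; simpl; lra. rewrite Ex_front.
  rewrite (rsum_ext _ _ q). apply Hq. intros x Hx. rewrite (lsum_map_ext _ _ (fun r => trans L 1 x r)).
  rewrite trans_sum; auto; lra. intros; lra. Qed.

Lemma Ex_le k q L n F G : goodL k L -> stochastic_vec k q -> (forall p, In p (paths k n) -> F p <= G p) -> Ex k q L n F <= Ex k q L n G.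
Proof. intros HL Hq H. unfold Ex. apply lsum_map_le. intros p Hp. apply Rmult_le_compat_l.
  eapply pathprob_nonneg; eauto. auto. Qed.

Lemma Ex_abs k q L n F : goodL k L -> stochastic_vec k q -> Rabs (Ex k q L n F) <= Ex k q L n (fun p => Rabs (F p)).
Proof. intros HL Hq. unfold Ex. eapply Rle_trans. apply lsum_map_abs. apply lsum_map_le.
  intros p Hp. rewrite Rabs_mult. rewrite (Rabs_pos_eq (pathprob q L p)). lra. eapply pathprob_nonneg; eauto. Qed.

Lemma Ex_bound k q L n F B : goodL k L -> stochastic_vec k q -> (forall p, In p (paths k n) -> Rabs (F p) <= B) -> Rabs (Ex k q L n F) <= B.
Proof. intros HL Hq H. eapply Rle_trans. apply Ex_abs; auto. eapply Rle_trans. apply Ex_le with (G := fun _ => B); auto.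
  replace (Ex k q L n (fun _ => B)) with (B * Ex k q L n (fun _ => 1)). rewrite Ex_one; auto; lra.
  rewrite <- Ex_scal. apply Ex_ext; intros; lra. Qed.

Lemma Ex_nonneg k q L n F : goodL k L -> stochastic_vec k q -> (forall p, In p (paths k n) -> 0 <= F p) -> 0 <= Ex k q L n F.
Proof. intros HL Hq H. apply Rle_trans with (Ex k q L n (fun _ => 0)). unfold Ex. rewrite (lsum_map_ext _ _ (fun _ => 0 * 0)).
  clear. induction (paths k n); simpl; lra. intros; lra. apply Ex_le; auto. Qed.

Lemma idm_row k i : (i < k)%nat -> rsum k (fun j => idm i j) = 1.
Proof. intros H. unfold idm. apply (rsum_ind' k i (fun _ => 1) H). Qed.

Lemma idm_col k j : (j < k)%nat -> rsum k (fun i => idm i j) = 1.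
Proof. intros H. unfold idm. apply (rsum_ind k j (fun _ => 1) H). Qed.

Lemma idm_mul_l k i f : (i < k)%nat -> rsum k (fun l => idm i l * f l) = f i.
Proof. intros H. unfold idm. rewrite <- (rsum_ind' k i f H). apply rsum_ext. intros l _. destruct (Nat.eqb i l); lra. Qed.

Lemma idm_mul_r k j f : (j < k)%nat -> rsum k (fun l => f l * idm l j) = f j.
Proof. intros H. unfold idm. rewrite <- (rsum_ind k j f H). apply rsum_ext. intros l _. destruct (Nat.eqb l j); lra. Qed.

Lemma idm_nonneg i j : 0 <= idm i j.
Proof. unfold idm. destruct (Nat.eqb i j); lra. Qed.

Lemma gen_rowsum k G i : is_generator k G -> (i < k)%nat -> rsum k (G i) = 0.
Proof. intros [H1 H2] Hi. pose proof (H2 i Hi). rewrite rsum_drop in H by auto. lra. Qed.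

Lemma gen_offdiag k G i j : is_generator k G -> (i < k)%nat -> (j < k)%nat -> i <> j -> 0 <= G i j.
Proof. intros [H1 _]; auto. Qed.

Lemma Kker_good k G M : is_generator k G ->
  (forall n, (M < n)%nat -> forall i j, (i < k)%nat -> (j < k)%nat -> 0 <= idm i j + G i j / INR n) ->
  goodL k (Kker G M).
Proof. intros HG HM n Hn. split.
  - intros i j Hi Hj. unfold Kker. destruct (Nat.ltb_spec M n). apply HM; auto. pose proof (idm_nonneg i j); lra.
  - intros i Hi. unfold Kker. rewrite rsum_plus, idm_row by auto. destruct (Nat.ltb_spec M n).
    unfold Rdiv. rewrite rsum_scal_r. change (rsum k (fun j => G i j)) with (rsum k (G i)). rewrite gen_rowsum; auto. lra.
    rewrite rsum_0; lra. Qed.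

Lemma argmin_exists k (f : nat -> R) : (1 <= k)%nat -> exists i0, (i0 < k)%nat /\ forall i, (i < k)%nat -> f i0 <= f i.
Proof. induction k; intros H. lia. destruct k. exists 0%nat. split; auto. intros i Hi. assert (i = 0%nat) by lia. subst; lra.
  destruct IHk as [i0 [H1 H2]]. lia. destruct (Rle_dec (f i0) (f (S k))).
  exists i0. split. lia. intros i Hi. destruct (Nat.eq_dec i (S k)). subst; auto. apply H2; lia.
  exists (S k). split. lia. intros i Hi. destruct (Nat.eq_dec i (S k)). subst; lra. pose proof (H2 i ltac:(lia)); lra. Qed.

Definition Amat (G : mat) (n : nat) : mat := fun a b => idm a b - G a b / INR n.


Lemma Amat_mul k G n f i : (i < k)%nat -> rsum k (fun l => Amat G n i l * f l) = f i - / INR n * rsum k (fun l => G i l * f l).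
Proof. intros Hi. unfold Amat. rewrite (rsum_ext _ _ (fun l => idm i l * f l - / INR n * (G i l * f l))).
  rewrite rsum_minus, idm_mul_l, rsum_scal by auto. auto. intros; unfold Rdiv; ring. Qed.

Lemma Kt_nonneg k G n Kt : is_generator k G -> (1 <= n)%nat ->
  (forall i j, (i < k)%nat -> (j < k)%nat -> mmul k (Amat G n) Kt i j = idm i j) ->
  forall i j, (i < k)%nat -> (j < k)%nat -> 0 <= Kt i j.
Proof. intros HG Hn HK i c Hi Hc. destruct (argmin_exists k (fun l => Kt l c)) as [i0 [Hi0 Hmin]]. lia.
  assert (E := HK i0 c Hi0 Hc). unfold mmul in E. rewrite Amat_mul in E by auto.
  assert (Hs : rsum k (fun l => G i0 l * Kt l c) = rsum k (fun l => G i0 l * (Kt l c - Kt i0 c))).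
  { rewrite (rsum_ext _ (fun l => G i0 l * (Kt l c - Kt i0 c))
      (fun l => G i0 l * Kt l c - Kt i0 c * G i0 l)). rewrite rsum_minus, rsum_scal.
    change (rsum k (fun j => G i0 j)) with (rsum k (G i0)). rewrite gen_rowsum; auto. ring. intros; ring. }
  assert (Hp : 0 <= rsum k (fun l => G i0 l * (Kt l c - Kt i0 c))).
  { apply rsum_nonneg. intros l Hl. destruct (Nat.eq_dec l i0). subst; lra.
    apply Rmult_le_pos. apply (gen_offdiag k G); auto. pose proof (Hmin l Hl); lra. }
  assert (0 < INR n) by (apply lt_0_INR; lia). assert (0 <= / INR n * rsum k (fun l => G i0 l * Kt l c)).
  { rewrite Hs. apply Rmult_le_pos; auto. left; apply Rinv_0_lt_compat; auto. }
  pose proof (idm_nonneg i0 c). pose proof (Hmin i Hi). lra. Qed.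

Lemma Kt_rowsum k G n Kt : is_generator k G ->
  (forall i j, (i < k)%nat -> (j < k)%nat -> mmul k Kt (Amat G n) i j = idm i j) ->
  forall i, (i < k)%nat -> rsum k (Kt i) = 1.
Proof. intros HG HK i Hi. transitivity (rsum k (fun j => mmul k Kt (Amat G n) i j)).
  2:{ rewrite (rsum_ext _ _ (fun j => idm i j)). apply idm_row; auto. intros; apply HK; auto. }
  symmetry. unfold mmul. rewrite rsum_swap.
  apply rsum_ext. intros l Hl. unfold Amat.
  rewrite (rsum_ext _ _ (fun j => Kt i l * idm l j - Kt i l * / INR n * G l j)).
  rewrite rsum_minus, rsum_scal, rsum_scal, idm_row by auto. change (rsum k (fun j => G l j)) with (rsum k (G l)).
  rewrite gen_rowsum; auto. ring. intros; unfold Rdiv; ring. Qed.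

Lemma Kt_stat k G n Kt mu : is_generator k G ->
  (forall j, (j < k)%nat -> rsum k (fun i => mu i * G i j) = 0) ->
  (forall i j, (i < k)%nat -> (j < k)%nat -> mmul k (Amat G n) Kt i j = idm i j) ->
  forall j, (j < k)%nat -> rsum k (fun i => mu i * Kt i j) = mu j.
Proof. intros HG HmuG HK j Hj. rewrite <- (idm_mul_r k j mu Hj).
  rewrite (rsum_ext k (fun l => mu l * idm l j) (fun l => mu l * mmul k (Amat G n) Kt l j)).
  2:{ intros l Hl; rewrite HK; auto. } unfold mmul.
  rewrite (rsum_ext k (fun l => mu l * rsum k (fun m => Amat G n l m * Kt m j)) (fun l => rsum k (fun m => mu l * Amat G n l m * Kt m j))).
  2:{ intros; rewrite <- rsum_scal; apply rsum_ext; intros; ring. }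
  rewrite rsum_swap. apply rsum_ext. intros m Hm. rewrite rsum_scal_r. f_equal.
  unfold Amat. rewrite (rsum_ext _ _ (fun l => mu l * idm l m - / INR n * (mu l * G l m))).
  rewrite rsum_minus, rsum_scal, HmuG by auto. rewrite (idm_mul_r k m mu) by auto. ring.
  intros; unfold Rdiv; ring. Qed.

Lemma Kt_expand k G n Kt : (1 <= n)%nat ->
  (forall i j, (i < k)%nat -> (j < k)%nat -> mmul k (Amat G n) Kt i j = idm i j) ->
  forall i j, (i < k)%nat -> (j < k)%nat ->
  Kt i j - idm i j - G i j / INR n = / (INR n ^ 2) * rsum k (fun l => G i l * rsum k (fun m => G l m * Kt m j)).
Proof. intros Hn HK.
  assert (Hpos : 0 < INR n) by (apply lt_0_INR; lia).
  assert (E1 : forall i j, (i < k)%nat -> (j < k)%nat -> Kt i j = idm i j + / INR n * rsum k (fun l => G i l * Kt l j)).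
  { intros i j Hi Hj. pose proof (HK i j Hi Hj) as E. unfold mmul in E. rewrite Amat_mul in E by auto. lra. }
  intros i j Hi Hj. rewrite E1 at 1 by auto.
  rewrite (rsum_ext k (fun l => G i l * Kt l j) (fun l => G i l * idm l j + / INR n * (G i l * rsum k (fun m => G l m * Kt m j)))).
  rewrite rsum_plus, rsum_scal, (idm_mul_r k j (G i)) by auto. field. lra.
  intros l Hl. rewrite E1 by auto. ring. Qed.

Lemma Kt_le1 k Kt : (forall i j, (i < k)%nat -> (j < k)%nat -> 0 <= Kt i j) -> (forall i, (i < k)%nat -> rsum k (Kt i) = 1) ->
  forall i j, (i < k)%nat -> (j < k)%nat -> Kt i j <= 1.
Proof. intros H1 H2 i j Hi Hj. rewrite <- (H2 i Hi). apply rsum_term_le; auto. Qed.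

Lemma Gabs_bound k (G : mat) : exists B, 0 <= B /\ forall i j, (i < k)%nat -> (j < k)%nat -> Rabs (G i j) <= B.
Proof. destruct (rsum_max k (fun i => rsum k (fun j => Rabs (G i j)))) as [B HB]. exists (Rmax 0 B). split. apply Rmax_l.
  intros i j Hi Hj. eapply Rle_trans; [|apply Rmax_r]. eapply Rle_trans; [|apply (HB i Hi)].
  apply (rsum_term_le k (fun j => Rabs (G i j))). intros; apply Rabs_pos. auto. Qed.

Lemma part1_gen k G M Kt : is_generator k G ->
  (forall n, (1 <= n)%nat -> forall i j, (i < k)%nat -> (j < k)%nat ->
     mmul k (Amat G n) (Kt n) i j = idm i j /\ mmul k (Kt n) (Amat G n) i j = idm i j) ->
  exists C, 0 <= C /\ forall n, (1 <= n)%nat -> forall i j, (i < k)%nat -> (j < k)%nat ->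
      Rabs (Kt n i j - Kker G M n i j) <= C / (INR n ^ 2).
Proof. intros HG HK. destruct (Gabs_bound k G) as [B [HB0 HB]].
  set (C0 := INR k * B * (INR k * B)).
  assert (HC0 : 0 <= C0) by (unfold C0; pose proof (pos_INR k); apply Rmult_le_pos; apply Rmult_le_pos; auto).
  exists (B * INR M + C0). split. pose proof (pos_INR M); pose proof (Rmult_le_pos _ _ HB0 H); lra.
  intros n Hn i j Hi Hj.
  assert (Hpos : 0 < INR n) by (apply lt_0_INR; lia).
  assert (Hnn : forall a b, (a < k)%nat -> (b < k)%nat -> 0 <= Kt n a b) by (apply (Kt_nonneg k G n (Kt n)); auto; intros; apply HK; auto).
  assert (Hr : forall a, (a < k)%nat -> rsum k (Kt n a) = 1) by (apply (Kt_rowsum k G n (Kt n)); auto; intros; apply HK; auto).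
  pose proof (Kt_le1 k (Kt n) Hnn Hr) as H1.
  assert (Hq : Rabs (rsum k (fun l => G i l * rsum k (fun m => G l m * Kt n m j))) <= C0).
  { eapply Rle_trans. apply rsum_abs. replace C0 with (rsum k (fun _ => B * (INR k * B))) by (rewrite rsum_const; unfold C0; ring).
    apply rsum_le. intros l Hl. rewrite Rabs_mult. apply Rmult_le_compat; try apply Rabs_pos. auto.
    eapply Rle_trans. apply rsum_abs. replace (INR k * B) with (rsum k (fun _ => B)) by (rewrite rsum_const; ring). apply rsum_le. intros m Hm.
    rewrite Rabs_mult. rewrite <- (Rmult_1_r B). apply Rmult_le_compat; try apply Rabs_pos. auto.
    rewrite Rabs_pos_eq; auto. }
  pose proof (Kt_expand k G n (Kt n) Hn (fun i j Hi Hj => proj1 (HK n Hn i j Hi Hj)) i j Hi Hj) as E.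
  assert (Hn2 : 0 < INR n ^ 2) by (apply pow_lt; auto).
  unfold Kker. destruct (Nat.ltb_spec M n).
  - replace (Kt n i j - (idm i j + G i j / INR n)) with (Kt n i j - idm i j - G i j / INR n) by ring. rewrite E.
    rewrite Rabs_mult, Rabs_pos_eq by (left; apply Rinv_0_lt_compat; auto).
    apply Rle_trans with (/ INR n ^ 2 * C0). apply Rmult_le_compat_l; auto. left; apply Rinv_0_lt_compat; auto.
    unfold Rdiv. rewrite Rmult_comm. apply Rmult_le_compat_r. left; apply Rinv_0_lt_compat; auto.
    pose proof (pos_INR M); pose proof (Rmult_le_pos _ _ HB0 H0); lra.
  - replace (Kt n i j - (idm i j + 0)) with (G i j / INR n + (Kt n i j - idm i j - G i j / INR n)) by ring. rewrite E.
    eapply Rle_trans. apply Rabs_triang. rewrite !Rabs_mult, (Rabs_pos_eq (/ INR n ^ 2)) by (left; apply Rinv_0_lt_compat; auto).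
    unfold Rdiv. rewrite Rabs_mult, (Rabs_pos_eq (/ INR n)) by (left; apply Rinv_0_lt_compat; auto).
    assert (HnM : INR n <= INR M) by (apply le_INR; lia).
    assert (Rabs (G i j) * / INR n <= B * INR M * / INR n ^ 2).
    { replace (Rabs (G i j) * / INR n) with (Rabs (G i j) * INR n * / INR n ^ 2) by (field; lra).
      apply Rmult_le_compat_r. left; apply Rinv_0_lt_compat; auto. apply Rmult_le_compat; try apply Rabs_pos; auto; lra. }
    assert (/ INR n ^ 2 * Rabs (rsum k (fun l => G i l * rsum k (fun m => G l m * Kt n m j))) <= C0 * / INR n ^ 2).
    { rewrite Rmult_comm. apply Rmult_le_compat_r; auto. left; apply Rinv_0_lt_compat; auto. }
    lra. Qed.

Lemma exp_le x y : x <= y -> exp x <= exp y.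
Proof. intros [H|H]. left; apply exp_increasing; auto. subst; lra. Qed.

Lemma exp_le_inv x y : exp x <= exp y -> x <= y.
Proof. intros H. destruct (Rle_dec x y); auto. assert (exp y < exp x) by (apply exp_increasing; lra). lra. Qed.

Definition Hsum (n0 n : nat) : R := rsum n (fun j => if Nat.leb n0 j then / INR j else 0).

Lemma Hsum_S n0 n : (n0 <= n)%nat -> Hsum n0 (S n) = Hsum n0 n + / INR n.
Proof. intros H. unfold Hsum. simpl. destruct (Nat.leb_spec n0 n); [lra|lia]. Qed.

Lemma Hsum_exp n0 n : (1 <= n0)%nat -> (n0 <= n)%nat -> INR n / INR n0 <= exp (Hsum n0 n).
Proof. intros H1 H2. induction H2.
  - unfold Hsum. rewrite (rsum_ext _ _ (fun _ => 0)). rewrite rsum_0, exp_0. right; field.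
    apply not_0_INR; lia. intros i Hi. destruct (Nat.leb_spec n0 i); [lia|auto].
  - rewrite Hsum_S by lia. rewrite exp_plus. assert (0 < INR m) by (apply lt_0_INR; lia).
    assert (0 < INR n0) by (apply lt_0_INR; lia).
    pose proof (exp_ineq1_le (/ INR m)). rewrite S_INR.
    apply Rle_trans with (INR m / INR n0 * (1 + / INR m)).
    right; field; lra. apply Rmult_le_compat; auto. left; apply Rdiv_lt_0_compat; auto.
    left; apply Rinv_0_lt_compat in H; lra. Qed.

Lemma decay_lemma (x : nat -> R) (alpha : R) (n3 : nat) : 0 < alpha -> (1 <= n3)%nat ->
  (forall n, (n3 <= n)%nat -> 0 <= x n /\ x (S n) <= (1 - alpha / INR n) * x n) -> Un_cv x 0.
Proof. intros Ha Hn3 H.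
  assert (Inv : forall n, (n3 <= n)%nat -> x n * exp (alpha * Hsum n3 n) <= x n3).
  { intros n Hn. induction Hn.
    - unfold Hsum. rewrite (rsum_ext _ _ (fun _ => 0)). rewrite rsum_0, Rmult_0_r, exp_0. lra.
      intros i Hi. destruct (Nat.leb_spec n3 i); [lia|auto].
    - rewrite Hsum_S by lia. assert (0 < INR m) by (apply lt_0_INR; lia).
      destruct (H m Hn) as [Hx Hs]. destruct (H (S m) ltac:(lia)) as [Hx' _].
      pose proof (exp_ineq1_le (- (alpha / INR m))).
      assert (E : exp (alpha * (Hsum n3 m + / INR m)) = exp (alpha * Hsum n3 m) * exp (alpha / INR m)).
      { rewrite <- exp_plus. f_equal. unfold Rdiv; ring. }
      rewrite E. pose proof (exp_pos (alpha * Hsum n3 m)). pose proof (exp_pos (alpha / INR m)).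
      assert (Hk : exp (- (alpha / INR m)) * exp (alpha / INR m) = 1) by (rewrite <- exp_plus; replace (- (alpha / INR m) + alpha / INR m) with 0 by ring; apply exp_0).
      apply Rle_trans with (x m * exp (alpha * Hsum n3 m)); auto.
      apply Rle_trans with ((1 - alpha / INR m) * x m * (exp (alpha * Hsum n3 m) * exp (alpha / INR m))).
      apply Rmult_le_compat_r. apply Rmult_le_pos; lra. auto.
      assert ((1 - alpha / INR m) * exp (alpha / INR m) <= 1).
      { rewrite <- Hk. apply Rmult_le_compat_r; lra. }
      replace ((1 - alpha / INR m) * x m * (exp (alpha * Hsum n3 m) * exp (alpha / INR m))) with
        (((1 - alpha / INR m) * exp (alpha / INR m)) * (x m * exp (alpha * Hsum n3 m))) by ring.
      rewrite <- (Rmult_1_l (x m * exp (alpha * Hsum n3 m))) at 2. apply Rmult_le_compat_r; auto.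
      apply Rmult_le_pos; lra. }
  intros eps Heps. destruct (H n3 (le_n _)) as [Hx0 _].
  set (T := (x n3 / eps) / alpha).
  assert (HT : 0 <= T) by (unfold T; apply Rmult_le_pos; [apply Rmult_le_pos; [lra| left; apply Rinv_0_lt_compat; lra]| left; apply Rinv_0_lt_compat; lra]).
  assert (E : alpha * T = x n3 / eps) by (unfold T; field; lra). clearbody T.
  destruct (INR_archimed 1 (INR n3 * exp T) ltac:(lra)) as [N HN].
  exists (max N n3). intros n Hn. unfold Rdist. rewrite Rminus_0_r.
  assert (Hnn : (n3 <= n)%nat) by lia. destruct (H n Hnn) as [Hxn _]. rewrite Rabs_pos_eq by auto.
  assert (0 < INR n3) by (apply lt_0_INR; lia).
  assert (HnN : INR N <= INR n) by (apply le_INR; lia).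
  assert (Hs : T <= Hsum n3 n).
  { apply exp_le_inv. apply Rle_trans with (INR n / INR n3). apply Rmult_le_reg_r with (INR n3); auto.
    unfold Rdiv. rewrite Rmult_assoc, Rinv_l, Rmult_1_r by lra. rewrite Rmult_comm. apply Rle_trans with (INR N * 1). left; apply HN. lra. apply Hsum_exp; auto. }
  pose proof (Inv n Hnn). pose proof (exp_ineq1_le (alpha * Hsum n3 n)).
  assert (alpha * T <= alpha * Hsum n3 n) by (apply Rmult_le_compat_l; lra).

  assert (x n * (1 + x n3 / eps) <= x n3).
  { apply Rle_trans with (x n * exp (alpha * Hsum n3 n)); auto. apply Rmult_le_compat_l; auto. lra. }
  destruct (Rle_lt_dec eps (x n)); auto.
  assert (Hfin : eps * (1 + x n3 / eps) <= x n * (1 + x n3 / eps)).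
  { apply Rmult_le_compat_r; auto. assert (0 <= x n3 / eps) by (apply Rmult_le_pos; [lra|left; apply Rinv_0_lt_compat; lra]). lra. }
  replace (eps * (1 + x n3 / eps)) with (eps + x n3) in Hfin by (field; lra). lra. Qed.

Lemma last_In_l {A} (l : list A) d : l <> nil -> In (last l d) l.
Proof. intros H. rewrite (app_removelast_last d H) at 2. apply in_or_app. right; simpl; auto. Qed.

Lemma last_paths k n p : (1 <= n)%nat -> In p (paths k n) -> (last p 0 < k)%nat.
Proof. intros Hn Hp. apply paths_in in Hp. destruct Hp as [Hl Hp]. apply Hp. apply last_In_l.
  intro E; rewrite E in Hl; simpl in Hl; lia. Qed.

Lemma Ex_last_decomp k q L n H : (1 <= n)%nat ->
  Ex k q L n (fun p => H (last p 0%nat) p) = rsum k (fun x => Ex k q L n (fun p => if Nat.eqb (last p 0%nat) x then H x p else 0)).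
Proof. intros Hn. rewrite <- Ex_rsum. apply Ex_ext. intros p Hp.
  rewrite (rsum_ind' k (last p 0%nat) (fun x => H x p)); auto. eapply last_paths; eauto. Qed.

Definition Pn k q L n x := Ex k q L n (fun p => if Nat.eqb (last p 0%nat) x then 1 else 0).

Lemma Pn_rec k q L n y : (1 <= n)%nat -> (y < k)%nat -> Pn k q L (S n) y = rsum k (fun x => Pn k q L n x * L n x y).
Proof. intros Hn Hy. unfold Pn. rewrite Ex_snoc by auto.
  rewrite (Ex_ext _ _ _ _ _ (fun p => L n (last p 0%nat) y)).
  2:{ intros p Hp. rewrite <- (rsum_ind k y (fun z => L n (last p 0%nat) z) Hy). apply rsum_ext. intros z _.
      rewrite last_last. destruct (Nat.eqb z y); ring. }
  rewrite (Ex_last_decomp k q L n (fun x _ => L n x y)) by auto. apply rsum_ext. intros x _.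
  rewrite <- (Rmult_comm (L n x y)), <- Ex_scal. apply Ex_ext. intros; destruct (Nat.eqb _ _); ring. Qed.

Lemma Pn_sum k q L n : goodL k L -> stochastic_vec k q -> (1 <= n)%nat -> rsum k (Pn k q L n) = 1.
Proof. intros HL Hq Hn. unfold Pn. transitivity (Ex k q L n (fun _ => 1)); [|apply Ex_one; auto].
  rewrite (Ex_last_decomp k q L n (fun _ _ => 1)) by auto. apply rsum_ext; intros; reflexivity. Qed.

Lemma Pn_nonneg k q L n x : goodL k L -> stochastic_vec k q -> 0 <= Pn k q L n x.
Proof. intros. apply Ex_nonneg; auto. intros; destruct (Nat.eqb _ _); lra. Qed.

Lemma min_pos_2d n1 n2 (F : nat -> nat -> R) : (forall i j, (i < n1)%nat -> (j < n2)%nat -> 0 < F i j) ->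
  exists g, 0 < g /\ forall i j, (i < n1)%nat -> (j < n2)%nat -> g <= F i j.
Proof. induction n1; intros H. exists 1. split; [lra|intros; lia].
  destruct IHn1 as [g [Hg H1]]. intros; apply H; auto; lia.
  destruct (rsum_min_pos n2 (F n1)) as [g' [Hg' H2]]. intros; apply H; auto.
  exists (Rmin g g'). split. apply Rmin_pos; auto. intros i j Hi Hj. destruct (Nat.eq_dec i n1).
  subst. eapply Rle_trans. apply Rmin_r. auto. eapply Rle_trans. apply Rmin_l. apply H1; auto; lia. Qed.

Lemma mixing k G M q mu : is_generator k G -> (forall i j, (i < k)%nat -> (j < k)%nat -> G i j <> 0) ->
  stochastic_vec k q -> stochastic_vec k mu ->
  (forall j, (j < k)%nat -> rsum k (fun i => mu i * G i j) = 0) ->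
  (forall n, (M < n)%nat -> forall i j, (i < k)%nat -> (j < k)%nat -> 0 <= idm i j + G i j / INR n) ->
  Un_cv (fun n => rsum k (fun x => Rabs (Pn k q (Kker G M) n x - mu x))) 0.
Proof. intros HG HGnz Hq Hmu HmuG HM.
  assert (HL := Kker_good k G M HG HM).
  assert (Hk : (1 <= k)%nat). { destruct k; [|lia]. destruct Hmu as [_ Hm]. simpl in Hm. lra. }
  destruct (min_pos_2d k k (fun x y => if Nat.eqb x y then 1 else G x y)) as [g [Hg Hgb]].
  { intros i j Hi Hj. destruct (Nat.eqb_spec i j). lra. pose proof (gen_offdiag k G i j HG Hi Hj n). pose proof (HGnz i j Hi Hj). lra. }
  destruct (Gabs_bound k G) as [B [HB0 HB]].
  destruct (INR_archimed 1 (B + g) ltac:(lra)) as [N HN].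
  set (n3 := max (S M) (max N 1)).
  apply (decay_lemma _ (INR k * g) n3). apply Rmult_lt_0_compat; auto. apply lt_0_INR; lia. unfold n3; lia.
  intros n Hn. split. apply rsum_nonneg; intros; apply Rabs_pos.
  assert (Hn1 : (1 <= n)%nat) by (unfold n3 in Hn; lia). assert (HMn : (M < n)%nat) by (unfold n3 in Hn; lia).
  assert (Hpos : 0 < INR n) by (apply lt_0_INR; lia).
  assert (HNn : INR N <= INR n) by (apply le_INR; unfold n3 in Hn; lia).
  set (A := fun x y => idm x y + G x y / INR n).
  set (beta := g / INR n).
  assert (HA : forall x y, (x < k)%nat -> (y < k)%nat -> Kker G M n x y = A x y).
  { intros. unfold Kker, A. destruct (Nat.ltb_spec M n); [auto|lia]. }
  assert (HAb : forall x y, (x < k)%nat -> (y < k)%nat -> beta <= A x y).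
  { intros x y Hx Hy. unfold A, beta, idm. pose proof (Hgb x y Hx Hy) as Hb. destruct (Nat.eqb_spec x y).
    - subst. pose proof (HB y y Hy Hy). apply Rabs_bnd in H. unfold Rdiv.
      apply Rmult_le_reg_r with (INR n); auto. rewrite Rmult_plus_distr_r, !Rmult_assoc, Rinv_l by lra. lra.
    - unfold Rdiv. rewrite Rplus_0_l. apply Rmult_le_compat_r; auto. left; apply Rinv_0_lt_compat; auto. }
  assert (HArow : forall x, (x < k)%nat -> rsum k (A x) = 1).
  { intros x Hx. rewrite <- (proj2 (HL n Hn1) x Hx). apply rsum_ext. intros; rewrite HA; auto. }
  set (u := fun x => Pn k q (Kker G M) n x - mu x).
  assert (Hu0 : rsum k u = 0). { unfold u. rewrite rsum_minus, Pn_sum by auto. destruct Hmu as [_ Hm]. lra. }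
  assert (Hrec : forall y, (y < k)%nat -> Pn k q (Kker G M) (S n) y - mu y = rsum k (fun x => u x * A x y)).
  { intros y Hy. rewrite Pn_rec by auto. unfold u. rewrite (rsum_ext k (fun x => (Pn k q (Kker G M) n x - mu x) * A x y)
       (fun x => Pn k q (Kker G M) n x * Kker G M n x y - mu x * A x y)).
    rewrite rsum_minus. f_equal. unfold A. rewrite (rsum_ext _ _ (fun x => mu x * idm x y + / INR n * (mu x * G x y))).
    rewrite rsum_plus, rsum_scal, HmuG, idm_mul_r by auto. ring. intros; unfold Rdiv; ring.
    intros x Hx. rewrite HA; auto. ring. }
  rewrite (rsum_ext _ _ (fun y => Rabs (rsum k (fun x => u x * A x y)))).
  2:{ intros y Hy. rewrite Hrec; auto. }
  apply Rle_trans with (rsum k (fun y => rsum k (fun x => Rabs (u x) * (A x y - beta)))).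
  { apply rsum_le. intros y Hy. replace (rsum k (fun x => u x * A x y)) with (rsum k (fun x => u x * (A x y - beta))).
    eapply Rle_trans. apply rsum_abs. apply rsum_le. intros x Hx. rewrite Rabs_mult. rewrite (Rabs_pos_eq (A x y - beta)).
    lra. pose proof (HAb x y Hx Hy); lra.
    rewrite (rsum_ext _ _ (fun x => u x * A x y - beta * u x)). rewrite rsum_minus, rsum_scal, Hu0. ring. intros; ring. }
  rewrite rsum_swap. apply Req_le. rewrite <- rsum_scal. apply rsum_ext. intros x Hx.
  rewrite rsum_scal. rewrite rsum_minus, HArow, rsum_const by auto. unfold u, beta. field. lra. Qed.

Definition ff (s m : nat) : R := rprod m (fun l => INR s - INR l).

Lemma ff_S s m : ff (S s) (S m) = INR (S s) * ff s m.
Proof. unfold ff. induction m. cbn [rprod]. change (INR 0) with 0. ring.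
  change (rprod (S (S m)) (fun l => INR (S s) - INR l)) with (rprod (S m) (fun l => INR (S s) - INR l) * (INR (S s) - INR (S m))).
  rewrite IHm. cbn [rprod]. rewrite !S_INR. ring. Qed.

Lemma ff_pascal s m : ff (S s) m = ff s m + INR m * ff s (m - 1).
Proof. destruct m. unfold ff; cbn [rprod INR]; ring. rewrite ff_S. replace (S m - 1)%nat with m by lia.
  unfold ff. cbn [rprod]. rewrite !S_INR. ring. Qed.

Lemma ff_zero s m : (s < m)%nat -> ff s m = 0.
Proof. unfold ff. induction m; intros H. lia. cbn [rprod]. destruct (Nat.eq_dec s m). subst; ring.
  rewrite IHm by lia. ring. Qed.

Lemma ff_bounds s m : 0 <= ff s m <= INR s ^ m.
Proof. induction m. unfold ff; cbn [rprod pow]; lra.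
  destruct (le_lt_dec m s).
  - unfold ff in *. cbn [rprod pow]. destruct IHm as [I1 I2]. assert (INR m <= INR s) by (apply le_INR; auto). pose proof (pos_INR m). pose proof (pos_INR s).
    split. apply Rmult_le_pos; lra. rewrite Rmult_comm. apply Rmult_le_compat; lra.
  - rewrite ff_zero by lia. split. lra. apply pow_le, pos_INR. Qed.

Lemma ff_diff s m n : (s <= n)%nat -> (1 <= n)%nat -> INR s ^ m - ff s m <= INR m ^ 2 * INR n ^ m / INR n.
Proof. intros Hs Hn. assert (Hp : 0 < INR n) by (apply lt_0_INR; lia). assert (Hsn : INR s <= INR n) by (apply le_INR; auto).
  pose proof (pos_INR s). induction m.
  - unfold ff; cbn [rprod pow INR]. unfold Rdiv. rewrite !Rmult_0_l. lra.
  - assert (E : INR s ^ S m - ff s (S m) = INR s * (INR s ^ m - ff s m) + INR m * ff s m).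
    { unfold ff. cbn [rprod pow]. ring. }
    rewrite E. destruct (ff_bounds s m) as [F1 F2].
    assert (INR s ^ m <= INR n ^ m) by (apply pow_incr; lra).
    assert (0 <= INR s ^ m - ff s m). lra.
    assert (INR s * (INR s ^ m - ff s m) <= INR n * (INR m ^ 2 * INR n ^ m / INR n)).
    { apply Rmult_le_compat; auto. }
    assert (INR m * ff s m <= INR m * INR n ^ m). { apply Rmult_le_compat_l. apply pos_INR. lra. }
    replace (INR n * (INR m ^ 2 * INR n ^ m / INR n)) with (INR m ^ 2 * INR n ^ m) in H2 by (field; lra).
    rewrite S_INR. replace ((INR m + 1) ^ 2 * INR n ^ S m / INR n) with ((INR m + 1) ^ 2 * INR n ^ m) by (simpl; field; lra).
    pose proof (pos_INR m). pose proof (pow_le (INR n) m ltac:(lra)).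
    assert ((INR m ^ 2 + INR m) * INR n ^ m <= (INR m + 1) ^ 2 * INR n ^ m) by (apply Rmult_le_compat_r; [auto|nra]).
    lra. Qed.

Definition Wm k (m : nat -> nat) (p : list nat) : R := rprod k (fun i => ff (visits p i) (m i)).
Definition dec (m : nat -> nat) (y : nat) : nat -> nat := fun i => if Nat.eqb i y then (m i - 1)%nat else m i.

Lemma visits_snoc p y i : visits (p ++ y :: nil) i = (visits p i + if Nat.eqb y i then 1 else 0)%nat.
Proof. unfold visits. rewrite count_occ_app. f_equal. simpl. destruct (Nat.eq_dec y i); destruct (Nat.eqb_spec y i); auto; congruence. Qed.

Lemma rprod_change k y u v : (y < k)%nat -> rprod k (fun i => if Nat.eqb i y then u else v i) = u * rprod k (fun i => if Nat.eqb i y then 1 else v i).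
Proof. induction k; intros H. lia. simpl. destruct (Nat.eq_dec y k).
  - subst. rewrite Nat.eqb_refl. rewrite (rprod_ext k (fun i => if Nat.eqb i k then u else v i) v).
    rewrite (rprod_ext k (fun i => if Nat.eqb i k then 1 else v i) v). ring.
    intros i Hi; destruct (Nat.eqb_spec i k); [lia|auto]. intros i Hi; destruct (Nat.eqb_spec i k); [lia|auto].
  - rewrite IHk by lia. destruct (Nat.eqb_spec k y); [lia|]. ring. Qed.

Lemma Wm_snoc k m p y : (y < k)%nat -> Wm k m (p ++ y :: nil) = Wm k m p + INR (m y) * Wm k (dec m y) p.
Proof. intros Hy. unfold Wm, dec.
  pose (R0 := fun i => ff (visits p i) (m i)).
  rewrite (rprod_ext k (fun i => ff (visits (p ++ y :: nil) i) (m i)) (fun i => if Nat.eqb i y then ff (S (visits p y)) (m y) else R0 i)).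
  rewrite (rprod_ext k (fun i => ff (visits p i) (m i)) (fun i => if Nat.eqb i y then ff (visits p y) (m y) else R0 i)).
  rewrite (rprod_ext k (fun i => ff (visits p i) (if Nat.eqb i y then (m i - 1)%nat else m i)) (fun i => if Nat.eqb i y then ff (visits p y) (m y - 1) else R0 i)).
  rewrite (rprod_change k y (ff (S (visits p y)) (m y))) by auto.
  rewrite (rprod_change k y (ff (visits p y) (m y))) by auto.
  rewrite (rprod_change k y (ff (visits p y) (m y - 1))) by auto. rewrite ff_pascal. ring.
  all: intros i Hi; unfold R0; destruct (Nat.eqb_spec i y); subst; auto.
  rewrite visits_snoc, Nat.eqb_refl. f_equal; lia.
  rewrite visits_snoc. destruct (Nat.eqb_spec y i); [congruence|]. f_equal; lia. Qed.

Definition am k q L m n x := Ex k q L n (fun p => if Nat.eqb (last p 0%nat) x then Wm k m p else 0).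

Lemma am_rec k q L m n y : (1 <= n)%nat -> (y < k)%nat ->
  am k q L m (S n) y = rsum k (fun x => (am k q L m n x + INR (m y) * am k q L (dec m y) n x) * L n x y).
Proof. intros Hn Hy. unfold am. rewrite Ex_snoc by auto.
  rewrite (Ex_ext _ _ _ _ _ (fun p => L n (last p 0%nat) y * (Wm k m p + INR (m y) * Wm k (dec m y) p))).
  2:{ intros p Hp. rewrite <- Wm_snoc by auto. rewrite <- (rsum_ind k y (fun z => L n (last p 0%nat) z * Wm k m (p ++ z :: nil)) Hy).
      apply rsum_ext. intros z _.
      rewrite last_last. destruct (Nat.eqb_spec z y); subst; ring. }
  rewrite (Ex_last_decomp k q L n (fun x p => L n x y * (Wm k m p + INR (m y) * Wm k (dec m y) p))) by auto. apply rsum_ext. intros x _.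
  rewrite <- Ex_scal, <- Ex_plus. rewrite Rmult_comm, <- Ex_scal. apply Ex_ext. intros; destruct (Nat.eqb _ _); ring. Qed.

Fixpoint nsum (k : nat) (m : nat -> nat) : nat := match k with O => O | S k' => (nsum k' m + m k')%nat end.

Lemma fold_plus_init a l : fold_right plus a l = (fold_right plus 0 l + a)%nat.
Proof. induction l; simpl; lia. Qed.

Lemma nsum_fold k m : fold_right plus 0%nat (map m (seq 0 k)) = nsum k m.
Proof. induction k; auto. rewrite seq_S, map_app, fold_right_app. simpl. rewrite fold_plus_init, IHk. lia. Qed.

Lemma nsum_ext k m m' : (forall i, (i < k)%nat -> m i = m' i) -> nsum k m = nsum k m'.
Proof. induction k; simpl; intros H; auto. rewrite IHk, H by (auto; lia). auto. Qed.

Lemma nsum_pos k m y : (y < k)%nat -> (m y <= nsum k m)%nat.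
Proof. induction k; simpl; intros Hy. lia. destruct (Nat.eq_dec y k). subst; lia. pose proof (IHk ltac:(lia)); lia. Qed.

Lemma nsum_dec k m y : (y < k)%nat -> (1 <= m y)%nat -> nsum k (dec m y) = (nsum k m - 1)%nat.
Proof. induction k; intros H1 H2. lia. simpl. unfold dec at 2. destruct (Nat.eqb_spec k y).
  - subst y. rewrite (nsum_ext k (dec m k) m). lia. intros i Hi; unfold dec; destruct (Nat.eqb_spec i k); [lia|auto].
  - rewrite IHk by (auto; lia). pose proof (nsum_pos k m y ltac:(lia)). lia. Qed.

Lemma nsum_zero k m : nsum k m = 0%nat -> forall i, (i < k)%nat -> m i = 0%nat.
Proof. induction k; simpl; intros H i Hi. lia. destruct (Nat.eq_dec i k). subst; lia. apply IHk; lia. Qed.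


Lemma Wm_zero k m p : (forall i, (i < k)%nat -> m i = 0%nat) -> Wm k m p = 1.
Proof. intros H. unfold Wm. induction k; simpl; auto. rewrite IHk by (intros; apply H; lia). rewrite H by lia. unfold ff; simpl; ring. Qed.

Lemma am_zero k q L m n x : (1 <= n)%nat -> (forall i, (i < k)%nat -> m i = 0%nat) -> am k q L m n x = Pn k q L n x.
Proof. intros Hn H. unfold am, Pn. apply Ex_ext. intros p _. rewrite Wm_zero; auto. Qed.

Lemma squeeze0 (x y : nat -> R) n0 : (forall n, (n0 <= n)%nat -> Rabs (x n) <= y n) -> Un_cv y 0 -> Un_cv x 0.
Proof. intros H Hy eps He. destruct (Hy eps He) as [N HN]. exists (max N n0). intros n Hn.
  specialize (HN n ltac:(lia)). specialize (H n ltac:(lia)). unfold Rdist in *. rewrite Rminus_0_r in *.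
  pose proof (Rle_abs (y n)). lra. Qed.

Lemma cv_inv_n : Un_cv (fun n => / INR n) 0.
Proof. intros eps He. destruct (INR_archimed eps 1 He) as [N HN]. exists (S N). intros n Hn.
  unfold Rdist. rewrite Rminus_0_r. assert (0 < INR n) by (apply lt_0_INR; lia).
  rewrite Rabs_pos_eq by (left; apply Rinv_0_lt_compat; auto). assert (INR N <= INR n) by (apply le_INR; lia).
  apply Rmult_lt_reg_r with (INR n); auto. rewrite Rinv_l by lra. nra. Qed.

Lemma cv_scal c x l : Un_cv x l -> Un_cv (fun n => c * x n) (c * l).
Proof. intros H. apply CV_mult; auto. intros eps He; exists 0%nat; intros; unfold Rdist; rewrite Rminus_diag_eq, Rabs_R0; auto. Qed.

Lemma cv_const c : Un_cv (fun _ => c) c.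
Proof. intros eps He; exists 0%nat; intros; unfold Rdist; rewrite Rminus_diag_eq, Rabs_R0; auto. Qed.

Lemma cv_rsum k (f : nat -> nat -> R) (l : nat -> R) : (forall i, (i < k)%nat -> Un_cv (fun n => f n i) (l i)) ->
  Un_cv (fun n => rsum k (f n)) (rsum k l).
Proof. induction k; intros H. simpl. apply cv_const. simpl. apply CV_plus. apply IHk; intros; apply H; lia. apply H; lia. Qed.

Lemma cv_minus x y l1 l2 : Un_cv x l1 -> Un_cv y l2 -> Un_cv (fun n => x n - y n) (l1 - l2).
Proof. intros H1 H2. apply CV_minus; auto. Qed.

Lemma cv_abs0 x : Un_cv x 0 -> Un_cv (fun n => Rabs (x n)) 0.
Proof. intros H. rewrite <- Rabs_R0. apply cv_cvabs; auto. Qed.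

Lemma cv_0_iff x l : Un_cv (fun n => x n - l) 0 -> Un_cv x l.
Proof. intros H eps He. destruct (H eps He) as [N HN]. exists N. intros n Hn. specialize (HN n Hn). unfold Rdist in *. rewrite Rminus_0_r in HN. auto. Qed.

Lemma cesaro_lemma (x d : nat -> R) n1 : (1 <= n1)%nat ->
  (forall n, (n1 <= n)%nat -> 0 <= x n /\ x (S n) <= INR n / INR (S n) * x n + d n / INR n) ->
  Un_cv d 0 -> Un_cv x 0.
Proof. intros Hn1 H Hd eps He.
  destruct (Hd (eps / 3) ltac:(lra)) as [N2 HN2].
  set (n2 := max N2 n1).
  assert (Inv : forall n, (n2 <= n)%nat -> INR n * x n <= INR n2 * x n2 + 2 * (eps / 3) * (INR n - INR n2)).
  { intros n Hn. induction Hn. lra.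
    destruct (H m ltac:(unfold n2 in Hn; lia)) as [Hx Hs]. specialize (HN2 m ltac:(unfold n2 in Hn; lia)).
    unfold Rdist in HN2. rewrite Rminus_0_r in HN2. apply Rlt_le in HN2. apply Rabs_bnd in HN2.
    assert (0 < INR m) by (apply lt_0_INR; unfold n2 in Hn; lia).
    assert (HS : INR (S m) = INR m + 1) by apply S_INR.
    assert (INR (S m) * x (S m) <= INR m * x m + INR (S m) / INR m * d m).
    { apply Rle_trans with (INR (S m) * (INR m / INR (S m) * x m + d m / INR m)). apply Rmult_le_compat_l. apply pos_INR. auto.
      right. field. lra. }
    assert (INR (S m) / INR m * d m <= 2 * (eps / 3)).
    { destruct (Rle_dec 0 (d m)).
      - apply Rle_trans with (2 * d m). apply Rmult_le_compat_r; auto. rewrite HS.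
        apply Rmult_le_reg_r with (INR m); auto. unfold Rdiv. rewrite Rmult_assoc, Rinv_l by lra.
        assert (1 <= INR m) by (apply (le_INR 1); unfold n2 in Hn; lia). lra. lra.
      - apply Rle_trans with 0. rewrite <- (Rmult_0_r (INR (S m) / INR m)). apply Rmult_le_compat_l. apply Rmult_le_pos. apply pos_INR. left; apply Rinv_0_lt_compat; auto. lra. lra. }
    rewrite HS in *. lra. }
  assert (Hx2 : 0 <= x n2) by (apply (H n2); unfold n2; lia).
  destruct (INR_archimed (eps / 3) (INR n2 * x n2) ltac:(lra)) as [N3 HN3].
  exists (max (max N3 n2) 1). intros n Hn. unfold Rdist. rewrite Rminus_0_r.
  destruct (H n ltac:(unfold n2 in Hn; lia)) as [Hxn _]. rewrite Rabs_pos_eq by auto.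
  specialize (Inv n ltac:(lia)). assert (0 < INR n) by (apply lt_0_INR; lia).
  assert (INR N3 <= INR n) by (apply le_INR; lia). assert (INR n2 <= INR n) by (apply le_INR; lia).
  pose proof (pos_INR n2).
  apply Rmult_lt_reg_l with (INR n); auto.
  assert (INR n2 * x n2 < INR n * (eps / 3)) by nra.
  assert (2 * (eps / 3) * (INR n - INR n2) <= 2 * (eps / 3) * INR n) by nra. nra. Qed.

Lemma rho_bound (t : R) (N : nat) : 0 <= t -> 0 <= (1 + t) ^ N - 1 - INR N * t <= INR N ^ 2 * t ^ 2 * (1 + t) ^ N.
Proof. intros Ht. induction N.
  - simpl. lra.
  - destruct IHN as [I1 I2]. rewrite S_INR.
    assert (E : (1 + t) ^ S N - 1 - (INR N + 1) * t = (1 + t) * ((1 + t) ^ N - 1 - INR N * t) + INR N * t ^ 2).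
    { simpl. ring. }
    rewrite E. pose proof (pos_INR N). assert (1 <= (1 + t) ^ N) by (apply pow_R1_Rle; lra).
    split. apply Rplus_le_le_0_compat. apply Rmult_le_pos; lra. apply Rmult_le_pos; auto. apply pow_le; lra.
    assert ((1 + t) * ((1 + t) ^ N - 1 - INR N * t) <= (1 + t) * (INR N ^ 2 * t ^ 2 * (1 + t) ^ N)) by (apply Rmult_le_compat_l; lra).
    assert (INR N * t ^ 2 <= INR N * t ^ 2 * (1 + t) ^ S N).
    { rewrite <- (Rmult_1_r (INR N * t ^ 2)) at 1. apply Rmult_le_compat_l. apply Rmult_le_pos; auto. apply pow_le; auto.
      apply pow_R1_Rle; lra. }
    assert (0 <= t ^ 2 * (1 + t) ^ S N) by (apply Rmult_le_pos; apply pow_le; lra).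
    replace ((1 + t) * (INR N ^ 2 * t ^ 2 * (1 + t) ^ N)) with (INR N ^ 2 * (t ^ 2 * (1 + t) ^ S N)) in H2 by (simpl; ring).
    replace (INR N * t ^ 2 * (1 + t) ^ S N) with (INR N * (t ^ 2 * (1 + t) ^ S N)) in H3 by ring.
    replace ((INR N + 1) ^ 2 * t ^ 2 * (1 + t) ^ S N) with ((INR N ^ 2 + 2 * INR N + 1) * (t ^ 2 * (1 + t) ^ S N)) by ring.
    nra. Qed.

Lemma step_lemma k G M N (v g : nat -> nat -> R) (c d : nat -> R) :
  is_generator k G -> (1 <= N)%nat ->
  (forall n, (M < n)%nat -> forall i j, (i < k)%nat -> (j < k)%nat -> 0 <= idm i j + G i j / INR n) ->
  (forall n, (M < n)%nat -> (1 <= n)%nat -> forall y, (y < k)%nat ->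
     v (S n) y * (1 + / INR n) ^ N = rsum k (fun x => v n x * (idm x y + G x y / INR n)) + g n y / INR n) ->
  (forall y, (y < k)%nat -> Un_cv (fun n => g n y) (d y)) ->
  (forall z, (z < k)%nat -> INR N * c z - rsum k (fun x => c x * G x z) = d z) ->
  forall x, (x < k)%nat -> Un_cv (fun n => v n x) (c x).
Proof. intros HG HN HM H1 H2 H3.
  set (X := fun n => rsum k (fun y => Rabs (v n y - c y))).
  set (Cc := rsum k (fun y => Rabs (c y))).
  set (E := fun n => rsum k (fun y => Rabs (g n y - d y)) + INR n * Rabs ((1 + / INR n) ^ N - 1 - INR N / INR n) * Cc).
  assert (HCc : 0 <= Cc) by (apply rsum_nonneg; intros; apply Rabs_pos).
  assert (HX : Un_cv X 0).
  { apply (cesaro_lemma X E (S M)). lia.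
    - intros n Hn. split. apply rsum_nonneg; intros; apply Rabs_pos.
      assert (HMn : (M < n)%nat) by lia. assert (Hn1 : (1 <= n)%nat) by lia.
      assert (Hp : 0 < INR n) by (apply lt_0_INR; lia).
      set (t := / INR n). assert (Ht : 0 < t) by (apply Rinv_0_lt_compat; auto).
      set (rho := (1 + t) ^ N).
      set (A := fun x y => idm x y + G x y / INR n).
      assert (HA : forall x y, (x < k)%nat -> (y < k)%nat -> 0 <= A x y) by (intros; apply HM; auto).
      assert (HAr : forall x, (x < k)%nat -> rsum k (A x) = 1).
      { intros x Hx. unfold A. rewrite rsum_plus, idm_row by auto. unfold Rdiv. rewrite rsum_scal_r.
        change (rsum k (fun j => G x j)) with (rsum k (G x)). rewrite gen_rowsum; auto. ring. }
      assert (Hrho : 0 <= rho - 1 - INR N * t <= INR N ^ 2 * t ^ 2 * rho) by (apply rho_bound; lra).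
      assert (HN' : 1 <= INR N) by (apply (le_INR 1); auto).
      assert (Hrho1 : 1 + t <= rho). { assert (t <= INR N * t) by nra. lra. }
      assert (Key : forall y, (y < k)%nat -> rho * (v (S n) y - c y) =
          rsum k (fun x => (v n x - c x) * A x y) + (g n y - d y) * t + (1 + INR N * t - rho) * c y).
      { intros y Hy. assert (E1 := H1 n HMn Hn1 y Hy). fold t in E1. fold rho in E1.
        assert (E2 : rsum k (fun x => c x * A x y) = c y + t * (INR N * c y - d y)).
        { unfold A. rewrite (rsum_ext _ _ (fun x => c x * idm x y + t * (c x * G x y))).
          rewrite rsum_plus, rsum_scal, idm_mul_r by auto. rewrite <- (H3 y Hy). ring. intros; unfold t, Rdiv; ring. }
        rewrite (rsum_ext _ _ (fun x => v n x * A x y - c x * A x y)) by (intros; ring).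
        rewrite rsum_minus, E2. replace (g n y / INR n) with (g n y * t) in E1 by (unfold t, Rdiv; ring).
        unfold A in *. lra. }
      assert (HXS : rho * X (S n) <= X n + E n / INR n).
      { unfold X. rewrite <- rsum_scal.
        apply Rle_trans with (rsum k (fun y => rsum k (fun x => Rabs (v n x - c x) * A x y) + Rabs (g n y - d y) * t + Rabs (1 + INR N * t - rho) * Rabs (c y))).
        - apply rsum_le. intros y Hy. replace (rho * Rabs (v (S n) y - c y)) with (Rabs (rho * (v (S n) y - c y))) by (rewrite Rabs_mult, (Rabs_pos_eq rho); lra).
          rewrite Key by auto.
          eapply Rle_trans. apply Rabs_triang. eapply Rle_trans. apply Rplus_le_compat_r. apply Rabs_triang.
          rewrite !Rabs_mult, (Rabs_pos_eq t) by lra. apply Rplus_le_compat_r. apply Rplus_le_compat_r.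
          eapply Rle_trans. apply rsum_abs. apply rsum_le. intros x Hx. rewrite Rabs_mult, (Rabs_pos_eq (A x y)) by auto. lra.
        - rewrite !rsum_plus. rewrite rsum_swap. rewrite rsum_scal_r, rsum_scal.
          rewrite (rsum_ext k (fun x => rsum k (fun y => Rabs (v n x - c x) * A x y)) (fun x => Rabs (v n x - c x))).
          2:{ intros x Hx. rewrite rsum_scal, HAr by auto. ring. }
          unfold E. apply Req_le. fold Cc. replace (INR N / INR n) with (INR N * t) by (unfold t, Rdiv; ring).
          replace (1 + t) with (1 + / INR n) in rho by auto.
          replace (Rabs (1 + INR N * t - rho)) with (Rabs ((1 + / INR n) ^ N - 1 - INR N * t)).
          unfold t. field. lra. rewrite <- Rabs_Ropp. f_equal. unfold rho, t. ring. }
      assert (HE : 0 <= E n). { unfold E. apply Rplus_le_le_0_compat. apply rsum_nonneg; intros; apply Rabs_pos.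
        apply Rmult_le_pos; auto. apply Rmult_le_pos. apply pos_INR. apply Rabs_pos. }
      assert (HX0 : 0 <= X n) by (apply rsum_nonneg; intros; apply Rabs_pos).
      assert (HXS0 : 0 <= X (S n)) by (apply rsum_nonneg; intros; apply Rabs_pos).
      rewrite S_INR. assert (Et : 1 + t = (INR n + 1) / INR n) by (unfold t; field; lra).
      assert (HnS : INR n / (INR n + 1) * ((INR n + 1) / INR n) = 1) by (field; lra).
      assert (X (S n) * (1 + t) <= X n + E n / INR n) by nra.
      rewrite Et in H. apply Rle_trans with (INR n / (INR n + 1) * (X n + E n / INR n)).
      apply Rle_trans with (INR n / (INR n + 1) * (X (S n) * ((INR n + 1) / INR n))).
      right. rewrite <- Rmult_assoc, (Rmult_comm (INR n / (INR n + 1))), Rmult_assoc, HnS. ring.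
      apply Rmult_le_compat_l; auto. apply Rmult_le_pos. lra. left; apply Rinv_0_lt_compat; lra.
      assert (INR n / (INR n + 1) <= 1). { apply Rmult_le_reg_r with (INR n + 1). lra. unfold Rdiv. rewrite Rmult_assoc, Rinv_l by lra. lra. }
      assert (0 <= E n / INR n) by (apply Rmult_le_pos; auto; left; apply Rinv_0_lt_compat; auto).
      assert (0 <= INR n / (INR n + 1)) by (apply Rmult_le_pos; [lra| left; apply Rinv_0_lt_compat; lra]). nra.
    - unfold E. replace 0 with (0 + 0 * Cc) by ring. apply CV_plus.
      + replace 0 with (rsum k (fun _ => 0)) by apply rsum_0. apply cv_rsum. intros y Hy. apply cv_abs0.
        replace 0 with (d y - d y) by ring. apply cv_minus; auto. apply cv_const.
      + apply CV_mult; [|apply cv_const].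
        apply (squeeze0 _ (fun n => INR N ^ 2 * 2 ^ N * / INR n) 1). intros n Hn.
        assert (Hp : 0 < INR n) by (apply lt_0_INR; lia). set (t := / INR n).
        assert (Ht : 0 < t) by (apply Rinv_0_lt_compat; auto).
        assert (Ht1 : t <= 1). { unfold t. rewrite <- Rinv_1. apply Rinv_le_contravar. lra. apply (le_INR 1); auto. }
        pose proof (rho_bound t N ltac:(lra)) as [R1 R2].
        replace (INR N / INR n) with (INR N * t) by (unfold t, Rdiv; ring).
        rewrite Rabs_mult, Rabs_Rabsolu, (Rabs_pos_eq (INR n)) by lra. rewrite (Rabs_pos_eq (_ - _ - _)) by auto.
        assert ((1 + t) ^ N <= 2 ^ N) by (apply pow_incr; lra).
        assert (INR N ^ 2 * t ^ 2 * (1 + t) ^ N <= INR N ^ 2 * t ^ 2 * 2 ^ N).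
        { apply Rmult_le_compat_l; auto. apply Rmult_le_pos; apply pow_le; try lra. apply pos_INR. }
        apply Rle_trans with (INR n * (INR N ^ 2 * t ^ 2 * 2 ^ N)). apply Rmult_le_compat_l; lra.
        right. unfold t. field. lra.
        replace 0 with (INR N ^ 2 * 2 ^ N * 0) by ring. apply cv_scal. apply cv_inv_n. }
  intros x Hx. apply cv_0_iff. apply (squeeze0 _ X 0); auto. intros n _.
  apply (rsum_term_le k (fun y => Rabs (v n y - c y))); auto. intros; apply Rabs_pos. Qed.

Fixpoint cN (k : nat) (mu : vec) (Kt : nat -> mat) (N : nat) (m : nat -> nat) : vec :=
  match N with
  | O => mu
  | S N' => fun z => / INR (S N') * rsum k (fun y => INR (m y) * cN k mu Kt N' (dec m y) y * Kt (S N') y z)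
  end.

Lemma Un_cv_ext x y l : (forall n, x n = y n) -> Un_cv x l -> Un_cv y l.
Proof. intros H Hx eps He. destruct (Hx eps He) as [N HN]. exists N. intros n Hn. rewrite <- H. auto. Qed.

Lemma Un_cv_ext_ev x y l n0 : (forall n, (n0 <= n)%nat -> x n = y n) -> Un_cv x l -> Un_cv y l.
Proof. intros H Hx eps He. destruct (Hx eps He) as [N HN]. exists (max N n0). intros n Hn. rewrite <- H by lia. apply HN; lia. Qed.

Lemma cN_eq k G mu Kt N m z : is_generator k G -> (z < k)%nat ->
  (forall i j, (i < k)%nat -> (j < k)%nat -> mmul k (Kt (S N)) (Amat G (S N)) i j = idm i j) ->
  INR (S N) * cN k mu Kt (S N) m z - rsum k (fun x => cN k mu Kt (S N) m x * G x z) = INR (m z) * cN k mu Kt N (dec m z) z.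
Proof. intros HG Hz HK. set (d := fun y => INR (m y) * cN k mu Kt N (dec m y) y).
  assert (HSN : 0 < INR (S N)) by (apply lt_0_INR; lia).
  assert (E1 : forall y, (y < k)%nat -> rsum k (fun x => Kt (S N) y x * G x z) = INR (S N) * (Kt (S N) y z - idm y z)).
  { intros y Hy. pose proof (HK y z Hy Hz) as E. unfold mmul, Amat in E.
    rewrite (rsum_ext _ _ (fun l => Kt (S N) y l * idm l z - / INR (S N) * (Kt (S N) y l * G l z))) in E.
    rewrite rsum_minus, rsum_scal, idm_mul_r in E by auto. rewrite <- E. field. lra. intros; unfold Rdiv; ring. }
  change (cN k mu Kt (S N) m) with (fun z => / INR (S N) * rsum k (fun y => d y * Kt (S N) y z)). cbv beta.
  rewrite (rsum_ext k (fun x => / INR (S N) * rsum k (fun y => d y * Kt (S N) y x) * G x z)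
     (fun x => rsum k (fun y => / INR (S N) * d y * (Kt (S N) y x * G x z)))).
  2:{ intros x Hx. rewrite Rmult_assoc, <- rsum_scal_r, <- rsum_scal. apply rsum_ext; intros; ring. }
  rewrite rsum_swap. rewrite (rsum_ext k (fun y => rsum k (fun x => / INR (S N) * d y * (Kt (S N) y x * G x z)))
     (fun y => d y * Kt (S N) y z - d y * idm y z)).
  2:{ intros y Hy. rewrite rsum_scal, E1 by auto. field. lra. }
  rewrite rsum_minus, idm_mul_r by auto. unfold d. field. lra. Qed.

Lemma pow_S_ratio n p : (1 <= n)%nat -> (1 + / INR n) ^ p / INR (S n) ^ p = / INR n ^ p.
Proof. intros Hn. assert (0 < INR n) by (apply lt_0_INR; lia). rewrite S_INR.
  replace (1 + / INR n) with ((INR n + 1) * / INR n) by (field; lra). rewrite Rpow_mult_distr, pow_inv.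
  field. split; apply pow_nonzero; lra. Qed.

Theorem moments k G M q mu Kt :
  is_generator k G -> (forall i j, (i < k)%nat -> (j < k)%nat -> G i j <> 0) ->
  stochastic_vec k q -> stochastic_vec k mu ->
  (forall j, (j < k)%nat -> rsum k (fun i => mu i * G i j) = 0) ->
  (forall n, (M < n)%nat -> forall i j, (i < k)%nat -> (j < k)%nat -> 0 <= idm i j + G i j / INR n) ->
  (forall n, (1 <= n)%nat -> forall i j, (i < k)%nat -> (j < k)%nat -> mmul k (Kt n) (Amat G n) i j = idm i j) ->
  forall N m, nsum k m = N -> forall x, (x < k)%nat ->
    Un_cv (fun n => am k q (Kker G M) m n x / INR n ^ N) (cN k mu Kt N m x).
Proof. intros HG HGnz Hq Hmu HmuG HM HK. induction N; intros m Hm x Hx.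
  - simpl cN. apply cv_0_iff. apply (squeeze0 _ (fun n => rsum k (fun x => Rabs (Pn k q (Kker G M) n x - mu x))) 1).
    intros n Hn. rewrite am_zero by (auto; apply nsum_zero; auto). simpl pow. rewrite Rdiv_1_r.
    apply (rsum_term_le k (fun x => Rabs (Pn k q (Kker G M) n x - mu x))); auto. intros; apply Rabs_pos.
    apply (mixing k G M q mu); auto.
  - set (A := fun n x y => idm x y + G x y / INR n).
    apply (step_lemma k G M (S N) (fun n x => am k q (Kker G M) m n x / INR n ^ S N)
       (fun n y => INR (m y) * rsum k (fun x => am k q (Kker G M) (dec m y) n x / INR n ^ N * A n x y))
       (cN k mu Kt (S N) m) (fun y => INR (m y) * cN k mu Kt N (dec m y) y)); auto; try lia.
    + intros n HMn Hn1 y Hy. assert (Hp : 0 < INR n) by (apply lt_0_INR; lia).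
      rewrite am_rec by auto.
      replace (rsum k (fun x => (am k q (Kker G M) m n x + INR (m y) * am k q (Kker G M) (dec m y) n x) * Kker G M n x y) / INR (S n) ^ S N * (1 + / INR n) ^ S N)
        with (rsum k (fun x => (am k q (Kker G M) m n x + INR (m y) * am k q (Kker G M) (dec m y) n x) * Kker G M n x y) * ((1 + / INR n) ^ S N / INR (S n) ^ S N)) by (unfold Rdiv; ring).
      rewrite pow_S_ratio by auto.
      rewrite (rsum_ext _ _ (fun x => am k q (Kker G M) m n x * A n x y + INR (m y) * am k q (Kker G M) (dec m y) n x * A n x y)).
      2:{ intros x' Hx'. unfold Kker, A. destruct (Nat.ltb_spec M n); [ring|lia]. }
      rewrite rsum_plus. rewrite <- (rsum_scal k (INR (m y))).
      rewrite Rmult_plus_distr_r. f_equal.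
      * rewrite <- rsum_scal_r. apply rsum_ext; intros. unfold A, Rdiv. ring.
      * rewrite <- rsum_scal_r. unfold Rdiv. rewrite <- rsum_scal_r. apply rsum_ext. intros. simpl pow. field; repeat split; try lra; apply pow_nonzero; lra.
    + intros y Hy. destruct (m y) eqn:Emy.
      * apply (Un_cv_ext (fun _ => 0)). intros; simpl; ring. replace (INR 0 * _) with 0 by (simpl; ring). apply cv_const.
      * rewrite <- Emy. apply cv_scal. rewrite <- (idm_mul_r k y (cN k mu Kt N (dec m y)) Hy).
        apply cv_rsum. intros x' Hx'. apply CV_mult. apply IHN; auto. rewrite nsum_dec by (auto; lia). lia.
        assert (Hc : Un_cv (fun n => idm x' y + G x' y * / INR n) (idm x' y + G x' y * 0)) by (apply CV_plus; [apply cv_const| apply cv_scal; apply cv_inv_n]).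
        rewrite Rmult_0_r, Rplus_0_r in Hc. eapply Un_cv_ext; [|exact Hc]. intros; unfold A, Rdiv; auto.
    + intros z Hz. apply cN_eq; auto. intros; apply HK; auto; lia. Qed.

Lemma rprod_mult k f g : rprod k (fun i => f i * g i) = rprod k f * rprod k g.
Proof. induction k; simpl; [ring|rewrite IHk; ring]. Qed.

Lemma rprod_pow_nsum k m a : rprod k (fun i => a ^ m i) = a ^ nsum k m.
Proof. induction k; simpl; auto. rewrite IHk, pow_add. auto. Qed.

Lemma rprod_inv k f : (forall i, (i < k)%nat -> f i <> 0) -> rprod k (fun i => / f i) = / rprod k f.
Proof. induction k; intros H; simpl. rewrite Rinv_1; auto. rewrite IHk by (intros; apply H; lia).
  rewrite Rinv_mult. auto. Qed.

Lemma rprod_diff k x y : (forall i, (i < k)%nat -> 0 <= x i <= 1 /\ 0 <= y i <= 1) ->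
  Rabs (rprod k x - rprod k y) <= rsum k (fun i => Rabs (x i - y i)) /\ 0 <= rprod k x <= 1 /\ 0 <= rprod k y <= 1.
Proof. induction k; intros H; simpl. rewrite Rminus_diag_eq, Rabs_R0 by auto. lra.
  destruct IHk as [I1 [I2 I3]]. intros; apply H; lia. destruct (H k ltac:(lia)) as [[X1 X2] [Y1 Y2]].
  split; [|split; split; nra].
  replace (rprod k x * x k - rprod k y * y k) with ((rprod k x - rprod k y) * x k + rprod k y * (x k - y k)) by ring.
  eapply Rle_trans. apply Rabs_triang. rewrite !Rabs_mult. rewrite (Rabs_pos_eq (x k)), (Rabs_pos_eq (rprod k y)) by lra.
  pose proof (Rabs_pos (rprod k x - rprod k y)). pose proof (Rabs_pos (x k - y k)). nra. Qed.

Lemma visits_le p i : (visits p i <= length p)%nat.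
Proof. unfold visits. induction p; simpl; auto. destruct (Nat.eq_dec a i); lia. Qed.

Lemma Eocc_am k q L m n : goodL k L -> stochastic_vec k q -> (1 <= n)%nat ->
  Rabs (Eocc k q L (monomial k m) n - rsum k (fun x => am k q L m n x) / INR n ^ nsum k m) <=
  rsum k (fun i => INR (m i) ^ 2) / INR n.
Proof. intros HL Hq Hn. assert (Hp : 0 < INR n) by (apply lt_0_INR; lia).
  assert (E : rsum k (fun x => am k q L m n x) = Ex k q L n (Wm k m)).
  { unfold am. rewrite <- (Ex_last_decomp k q L n (fun _ p => Wm k m p)) by auto. auto. }
  rewrite E. unfold Rdiv at 1. rewrite Rmult_comm, <- Ex_scal. unfold Eocc. fold (Ex k q L n (fun p => monomial k m (occ n p))).
  rewrite <- Ex_minus. apply Ex_bound; auto. intros p Hp'.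
  destruct (paths_in k n p Hp') as [Hl _].
  unfold monomial, occ, Wm. rewrite <- (rprod_pow_nsum k m (INR n)).
  rewrite <- rprod_inv by (intros; apply pow_nonzero; lra). rewrite <- rprod_mult.
  replace (rsum k (fun i => INR (m i) ^ 2) / INR n) with (rsum k (fun i => INR (m i) ^ 2 / INR n)) by (unfold Rdiv; rewrite rsum_scal_r; auto).
  eapply Rle_trans. apply rprod_diff.
  - intros i Hi. assert (Hs : (visits p i <= n)%nat) by (rewrite <- Hl; apply visits_le).
    assert (HS : INR (visits p i) <= INR n) by (apply le_INR; auto). pose proof (pos_INR (visits p i)).
    destruct (ff_bounds (visits p i) (m i)) as [F1 F2].
    assert (Hsn : INR (visits p i) ^ m i <= INR n ^ m i) by (apply pow_incr; lra).
    assert (Hpn : 0 < INR n ^ m i) by (apply pow_lt; auto).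
    split.
    + split. apply pow_le. apply Rmult_le_pos; auto. left; apply Rinv_0_lt_compat; auto.
      rewrite <- (pow1 (m i)). apply pow_incr. split. apply Rmult_le_pos; auto. left; apply Rinv_0_lt_compat; auto.
      apply Rmult_le_reg_r with (INR n); auto. unfold Rdiv. rewrite Rmult_assoc, Rinv_l by lra. lra.
    + assert (0 <= / INR n ^ m i) by (left; apply Rinv_0_lt_compat; auto). split. apply Rmult_le_pos; auto.
      apply Rmult_le_reg_r with (INR n ^ m i); auto.
      replace (/ INR n ^ m i * ff (visits p i) (m i) * INR n ^ m i) with (ff (visits p i) (m i)) by (field; lra). lra.
  - apply rsum_le. intros i Hi. assert (Hs : (visits p i <= n)%nat) by (rewrite <- Hl; apply visits_le).
    pose proof (ff_diff (visits p i) (m i) n Hs Hn). destruct (ff_bounds (visits p i) (m i)) as [F1 F2].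
    assert (Hpn : 0 < INR n ^ m i) by (apply pow_lt; auto).
    set (v := INR (visits p i)). set (f := ff (visits p i) (m i)). fold v f in H, F1, F2.
    replace ((v / INR n) ^ m i - / INR n ^ m i * f) with ((v ^ m i - f) / INR n ^ m i).
    2:{ unfold Rdiv. rewrite Rpow_mult_distr, pow_inv. ring. }
    rewrite Rabs_pos_eq by (apply Rmult_le_pos; [lra| left; apply Rinv_0_lt_compat; auto]).
    apply Rmult_le_reg_r with (INR n ^ m i); auto.
    replace ((v ^ m i - f) / INR n ^ m i * INR n ^ m i) with (v ^ m i - f) by (field; lra).
    replace (INR (m i) ^ 2 / INR n * INR n ^ m i) with (INR (m i) ^ 2 * INR n ^ m i / INR n) by (field; lra). lra. Qed.

Lemma cont_const k c : continuous_k k (fun _ => c).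
Proof. intros x eps He. exists 1. split. lra. intros. rewrite Rminus_diag_eq, Rabs_R0; auto. Qed.

Lemma cont_coord k i : (i < k)%nat -> continuous_k k (fun x => x i).
Proof. intros Hi x eps He. exists eps. split; auto. Qed.

Lemma cont_mult k f g : continuous_k k f -> continuous_k k g -> continuous_k k (fun x => f x * g x).
Proof. intros Hf Hg x eps He. set (a := Rabs (f x)). set (b := Rabs (g x)).
  assert (Ha : 0 <= a) by apply Rabs_pos. assert (Hb : 0 <= b) by apply Rabs_pos.
  destruct (Hf x (Rmin 1 (eps / (2 * (b + 1)))) ltac:(apply Rmin_pos; [lra|apply Rdiv_lt_0_compat; lra])) as [d1 [Hd1 H1]].
  destruct (Hg x (eps / (2 * (a + 1))) ltac:(apply Rdiv_lt_0_compat; lra)) as [d2 [Hd2 H2]].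
  exists (Rmin d1 d2). split. apply Rmin_pos; auto. intros y Hy.
  assert (Hy1 : forall i, (i < k)%nat -> Rabs (y i - x i) < d1) by (intros i Hi; specialize (Hy i Hi); pose proof (Rmin_l d1 d2); lra).
  assert (Hy2 : forall i, (i < k)%nat -> Rabs (y i - x i) < d2) by (intros i Hi; specialize (Hy i Hi); pose proof (Rmin_r d1 d2); lra).
  specialize (H1 y Hy1). specialize (H2 y Hy2).
  pose proof (Rmin_l 1 (eps / (2 * (b + 1)))). pose proof (Rmin_r 1 (eps / (2 * (b + 1)))).
  replace (f y * g y - f x * g x) with (f y * (g y - g x) + g x * (f y - f x)) by ring.
  eapply Rle_lt_trans. apply Rabs_triang. rewrite !Rabs_mult. fold b.
  assert (Rabs (f y) <= a + 1). { unfold a. pose proof (Rabs_triang_inv (f y) (f x)). lra. }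
  assert (Rabs (f y) * Rabs (g y - g x) <= (a + 1) * Rabs (g y - g x)) by (apply Rmult_le_compat_r; [apply Rabs_pos|auto]).
  assert ((a + 1) * Rabs (g y - g x) < (a + 1) * (eps / (2 * (a + 1)))) by (apply Rmult_lt_compat_l; lra).
  replace ((a + 1) * (eps / (2 * (a + 1)))) with (eps / 2) in H5 by (field; lra).
  assert (b * Rabs (f y - f x) <= b * (eps / (2 * (b + 1)))) by (apply Rmult_le_compat_l; lra).
  assert (b * (eps / (2 * (b + 1))) < eps / 2).
  { replace (b * (eps / (2 * (b + 1)))) with ((eps / 2) * (b / (b + 1))) by (field; lra).
    assert (b / (b + 1) < 1). { apply Rmult_lt_reg_r with (b + 1). lra. unfold Rdiv. rewrite Rmult_assoc, Rinv_l by lra. lra. }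
    assert (0 <= b / (b + 1)) by (apply Rmult_le_pos; [lra|left; apply Rinv_0_lt_compat; lra]). nra. }
  lra. Qed.

Lemma cont_pow k f p : continuous_k k f -> continuous_k k (fun x => f x ^ p).
Proof. intros Hf. induction p. simpl. apply cont_const. simpl. apply cont_mult; auto. Qed.

Lemma cont_monomial k m : continuous_k k (monomial k m).
Proof. unfold monomial. assert (forall j, (j <= k)%nat -> continuous_k k (fun x => rprod j (fun i => x i ^ m i))).
  { induction j; intros Hj. simpl. apply cont_const. simpl. apply cont_mult. apply IHj; lia. apply cont_pow. apply cont_coord. lia. }
  apply H; auto. Qed.

Definition indm k m (p : list nat) : R := if forallb (fun i => Nat.eqb (visits p i) (m i)) (seq 0 k) then 1 else 0.

Lemma indm_true k m p : (forall i, (i < k)%nat -> visits p i = m i) -> indm k m p = 1.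
Proof. intros H. unfold indm. replace (forallb _ _) with true; auto. symmetry. apply forallb_forall.
  intros i Hi. apply in_seq in Hi. apply Nat.eqb_eq. apply H. lia. Qed.

Lemma indm_false k m p : ~ (forall i, (i < k)%nat -> visits p i = m i) -> indm k m p = 0.
Proof. intros H. unfold indm. destruct (forallb _ _) eqn:E; auto. exfalso. apply H. intros i Hi.
  rewrite forallb_forall in E. apply Nat.eqb_eq. apply E. apply in_seq. lia. Qed.

Lemma visits_removelast p i : p <> nil -> visits p i = (visits (removelast p) i + if Nat.eqb (last p 0%nat) i then 1 else 0)%nat.
Proof. intros H. rewrite (app_removelast_last 0%nat H) at 1. apply visits_snoc. Qed.

Lemma indm_removelast k m p : p <> nil -> (last p 0 < k)%nat ->
  indm k m p = if Nat.leb 1 (m (last p 0%nat)) then indm k (dec m (last p 0%nat)) (removelast p) else 0.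
Proof. intros Hp Hl. set (l := last p 0%nat) in *.
  destruct (classic (forall i, (i < k)%nat -> visits p i = m i)) as [H|H].
  - rewrite indm_true by auto. assert (Hml : (1 <= m l)%nat). { rewrite <- (H l Hl). rewrite visits_removelast by auto. fold l. rewrite Nat.eqb_refl. lia. }
    destruct (Nat.leb_spec 1 (m l)); [|lia]. symmetry. apply indm_true. intros i Hi. unfold dec.
    specialize (H i Hi). rewrite visits_removelast in H by auto. fold l in H.
    destruct (Nat.eqb_spec i l); destruct (Nat.eqb_spec l i); subst; lia.
  - rewrite indm_false by auto. destruct (Nat.leb_spec 1 (m l)); auto. symmetry. apply indm_false.
    intros H'. apply H. intros i Hi. specialize (H' i Hi). unfold dec in H'. rewrite visits_removelast by auto. fold l.
    destruct (Nat.eqb_spec i l); destruct (Nat.eqb_spec l i); subst; lia. Qed.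

Lemma paths_nonnil k n p : (1 <= n)%nat -> In p (paths k n) -> p <> nil.
Proof. intros Hn Hp E. apply paths_in in Hp. destruct Hp as [Hl _]. subst p. simpl in Hl. lia. Qed.

Definition Vv k mu Kt N m z := Ex k mu Kt (S N) (fun p => if Nat.eqb (last p 0%nat) z then indm k m (removelast p) else 0).

Lemma Vv_0 k mu Kt m z : (z < k)%nat -> Vv k mu Kt 0 m z = mu z * indm k m nil.
Proof. intros Hz. unfold Vv. rewrite Ex_front. simpl paths. rewrite <- (rsum_ind k z (fun x => mu x * indm k m nil) Hz).
  apply rsum_ext. intros x _. simpl. destruct (Nat.eqb x z); ring. Qed.

Lemma Vv_S k mu Kt N m z : (z < k)%nat -> Vv k mu Kt (S N) m z =
  rsum k (fun y => (if Nat.leb 1 (m y) then Vv k mu Kt N (dec m y) y else 0) * Kt (S N) y z).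
Proof. intros Hz. unfold Vv at 1. rewrite Ex_snoc by lia.
  rewrite (Ex_ext _ _ _ _ _ (fun p => Kt (S N) (last p 0%nat) z * indm k m p)).
  2:{ intros p _. rewrite <- (rsum_ind k z (fun w => Kt (S N) (last p 0%nat) w * indm k m p) Hz). apply rsum_ext.
      intros w _. rewrite last_last, removelast_last. destruct (Nat.eqb w z); ring. }
  rewrite (Ex_last_decomp k mu Kt (S N) (fun y p => Kt (S N) y z * indm k m p)) by lia.
  apply rsum_ext. intros y Hy. destruct (Nat.leb_spec 1 (m y)).
  - transitivity (Kt (S N) y z * Vv k mu Kt N (dec m y) y); [|ring]. unfold Vv. rewrite <- Ex_scal. apply Ex_ext. intros p Hp. destruct (Nat.eqb_spec (last p 0%nat) y); [|ring].
    rewrite indm_removelast. subst y. destruct (Nat.leb_spec 1 (m (last p 0%nat))); [ring|lia].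
    apply (paths_nonnil k (S N) p); auto; lia. apply (last_paths k (S N) p); auto; lia.
  - rewrite Rmult_0_l. rewrite (Ex_ext _ _ _ _ _ (fun _ => 0 * 0)). rewrite Ex_scal; ring.
    intros p Hp. destruct (Nat.eqb_spec (last p 0%nat) y); [|ring].
    rewrite indm_removelast. subst y. destruct (Nat.leb_spec 1 (m (last p 0%nat))); [lia|ring].
    apply (paths_nonnil k (S N) p); auto; lia. apply (last_paths k (S N) p); auto; lia. Qed.

Definition Rm k m := rprod k (fun i => INR (fact (m i))).

Lemma Rm_dec k m y : (y < k)%nat -> (1 <= m y)%nat -> INR (m y) * Rm k (dec m y) = Rm k m.
Proof. intros Hy H1. unfold Rm, dec.
  rewrite (rprod_ext k (fun i => INR (fact (if Nat.eqb i y then (m i - 1)%nat else m i))) (fun i => if Nat.eqb i y then INR (fact (m y - 1)) else INR (fact (m i)))).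
  rewrite (rprod_ext k (fun i => INR (fact (m i))) (fun i => if Nat.eqb i y then INR (fact (m y)) else INR (fact (m i)))).
  rewrite (rprod_change k y (INR (fact (m y - 1)))) by auto. rewrite (rprod_change k y (INR (fact (m y)))) by auto.
  destruct (m y) as [|a] eqn:Ea; [lia|]. replace (S a - 1)%nat with a by lia. rewrite fact_simpl, mult_INR. ring.
  all: intros i Hi; destruct (Nat.eqb_spec i y); subst; auto. Qed.

Lemma Rm_zero k m : (forall i, (i < k)%nat -> m i = 0%nat) -> Rm k m = 1.
Proof. intros H. unfold Rm. induction k; simpl; auto. rewrite IHk by (intros; apply H; lia). rewrite H by lia. simpl; ring. Qed.

Lemma cN_V k mu Kt N m z : nsum k m = N -> (z < k)%nat ->
  cN k mu Kt N m z = Rm k m / INR (fact N) * Vv k mu Kt N m z.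
Proof. revert m z. induction N; intros m z Hm Hz.
  - simpl cN. rewrite Vv_0 by auto. rewrite Rm_zero by (apply nsum_zero; auto). rewrite indm_true. simpl; field.
    intros i Hi. rewrite (nsum_zero k m Hm i Hi). auto.
  - cbn [cN]. rewrite Vv_S by auto. rewrite <- rsum_scal, <- rsum_scal. apply rsum_ext. intros y Hy.
    destruct (Nat.leb_spec 1 (m y)).
    + rewrite IHN. rewrite <- (Rm_dec k m y) by auto. replace (fact (S N)) with (S N * fact N)%nat by auto.
      rewrite mult_INR. assert (INR (S N) <> 0) by (apply not_0_INR; lia). assert (INR (fact N) <> 0) by (apply not_0_INR, fact_neq_0). field; auto. rewrite nsum_dec by auto. lia. auto.
    + replace (m y) with 0%nat by lia. simpl INR. ring. Qed.

Lemma Vv_sum_Pevent k mu Kt N m : goodL k Kt -> (1 <= N)%nat ->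
  rsum k (fun z => Vv k mu Kt N m z) = Pevent k mu Kt N (fun p => forallb (fun i => Nat.eqb (visits p i) (m i)) (seq 0 k)).
Proof. intros HL HN. unfold Vv. rewrite <- (Ex_last_decomp k mu Kt (S N) (fun _ p => indm k m (removelast p))) by lia.
  rewrite Ex_snoc by auto. rewrite (Ex_ext _ _ _ _ _ (fun p => indm k m p)).
  2:{ intros p Hp. rewrite (rsum_ext _ _ (fun w => indm k m p * Kt N (last p 0%nat) w)).
      rewrite rsum_scal. change (rsum k (fun w => Kt N (last p 0%nat) w)) with (rsum k (Kt N (last p 0%nat))).
      rewrite (proj2 (HL N HN)). ring. eapply last_paths; eauto. intros. rewrite removelast_last; ring. }
  unfold Ex, Pevent. apply lsum_map_ext. intros p _. unfold indm. destruct (forallb _ _); ring. Qed.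

Lemma Kt_good k G Kt : is_generator k G ->
  (forall n, (1 <= n)%nat -> forall i j, (i < k)%nat -> (j < k)%nat ->
     mmul k (Amat G n) (Kt n) i j = idm i j /\ mmul k (Kt n) (Amat G n) i j = idm i j) -> goodL k Kt.
Proof. intros HG HK n Hn. split. apply (Kt_nonneg k G n (Kt n)); auto; intros; apply HK; auto.
  apply (Kt_rowsum k G n (Kt n)); auto; intros; apply HK; auto. Qed.

Lemma part3_gen k G mu M Kt p0 (nu : (vec -> R) -> R) :
  is_generator k G -> (forall i j, (i < k)%nat -> (j < k)%nat -> G i j <> 0) ->
  stochastic_vec k mu -> (forall j, (j < k)%nat -> rsum k (fun i => mu i * G i j) = 0) ->
  (forall n, (M < n)%nat -> forall i j, (i < k)%nat -> (j < k)%nat -> 0 <= idm i j + G i j / INR n) ->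
  (forall n, (1 <= n)%nat -> forall i j, (i < k)%nat -> (j < k)%nat ->
     mmul k (Amat G n) (Kt n) i j = idm i j /\ mmul k (Kt n) (Amat G n) i j = idm i j) ->
  stochastic_vec k p0 ->
  (forall f, continuous_k k f -> Un_cv (Eocc k p0 (Kker G M) f) (nu f)) ->
  forall (m : nat -> nat) (N : nat), N = fold_right plus 0%nat (map m (seq 0 k)) -> (0 < N)%nat ->
      nu (monomial k m) = rprod k (fun i => INR (fact (m i))) / INR (fact N) *
        Pevent k mu Kt N (fun p => forallb (fun i => Nat.eqb (visits p i) (m i)) (seq 0 k)).
Proof. intros HG HGnz Hmu HmuG HM HK Hp0 Hnu m N HN HN0. rewrite nsum_fold in HN.
  assert (HKg := Kt_good k G Kt HG HK). assert (HLg := Kker_good k G M HG HM).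
  assert (H1 := Hnu _ (cont_monomial k m)).
  assert (H2 : Un_cv (fun n => rsum k (fun x => am k p0 (Kker G M) m n x) / INR n ^ N) (rsum k (cN k mu Kt N m))).
  { apply (Un_cv_ext (fun n => rsum k (fun x => am k p0 (Kker G M) m n x / INR n ^ N))).
    intros n. unfold Rdiv. rewrite rsum_scal_r. auto. apply cv_rsum. intros x Hx.
    apply (moments k G M p0 mu Kt); auto. intros; apply HK; auto. }
  assert (H3 : Un_cv (fun n => Eocc k p0 (Kker G M) (monomial k m) n - rsum k (fun x => am k p0 (Kker G M) m n x) / INR n ^ N) 0).
  { apply (squeeze0 _ (fun n => rsum k (fun i => INR (m i) ^ 2) * / INR n) 1). intros n Hn. rewrite HN. apply Eocc_am; auto.
    replace 0 with (rsum k (fun i => INR (m i) ^ 2) * 0) by ring. apply cv_scal. apply cv_inv_n. }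
  assert (H4 : Un_cv (Eocc k p0 (Kker G M) (monomial k m)) (rsum k (cN k mu Kt N m))).
  { apply (Un_cv_ext (fun n => (Eocc k p0 (Kker G M) (monomial k m) n - rsum k (fun x => am k p0 (Kker G M) m n x) / INR n ^ N) + rsum k (fun x => am k p0 (Kker G M) m n x) / INR n ^ N)).
    intros; ring. replace (rsum k (cN k mu Kt N m)) with (0 + rsum k (cN k mu Kt N m)) by ring. apply CV_plus; auto. }
  rewrite (UL_sequence _ _ _ H1 H4).
  rewrite (rsum_ext _ _ (fun z => Rm k m / INR (fact N) * Vv k mu Kt N m z)).
  2:{ intros z Hz. apply cN_V; auto. }
  rewrite rsum_scal, Vv_sum_Pevent by (auto; lia). unfold Rm. auto. Qed.

Lemma nsum_single k i N : (i < k)%nat -> nsum k (fun j => if Nat.eqb j i then N else 0%nat) = N.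
Proof. induction k; intros H. lia. simpl. destruct (Nat.eqb_spec k i).
  - subst. rewrite (nsum_ext _ _ (fun _ => 0%nat)). clear. induction i; simpl; lia. intros j Hj. destruct (Nat.eqb_spec j i); lia.
  - rewrite IHk by lia. lia. Qed.

Lemma visits_all p i : (forall x, In x p -> x = i) -> visits p i = length p.
Proof. unfold visits. induction p; simpl; intros H; auto. destruct (Nat.eq_dec a i). rewrite IHp; auto.
  exfalso; apply n; apply H; auto. Qed.

Lemma rprod_ones k : rprod k (fun _ => 1) = 1.
Proof. induction k; simpl; auto. rewrite IHk; ring. Qed.

Lemma part4_from3 k (mu : vec) (Kt : nat -> mat) (nu : (vec -> R) -> R) :
  (forall (m : nat -> nat) (N : nat), N = fold_right plus 0%nat (map m (seq 0 k)) -> (0 < N)%nat ->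
      nu (monomial k m) = rprod k (fun i => INR (fact (m i))) / INR (fact N) *
        Pevent k mu Kt N (fun p => forallb (fun i => Nat.eqb (visits p i) (m i)) (seq 0 k))) ->
  forall (i N : nat), (i < k)%nat -> (0 < N)%nat ->
      nu (fun x => x i ^ N) = Pevent k mu Kt N (fun p => forallb (fun x => Nat.eqb x i) p).
Proof. intros H3 i N Hi HN. set (m := fun j => if Nat.eqb j i then N else 0%nat).
  assert (Hm : N = fold_right plus 0%nat (map m (seq 0 k))) by (rewrite nsum_fold; unfold m; rewrite nsum_single; auto).
  specialize (H3 m N Hm HN).
  assert (Emono : monomial k m = fun x => x i ^ N).
  { apply functional_extensionality. intros x. unfold monomial, m.
    rewrite (rprod_ext k (fun j => x j ^ (if Nat.eqb j i then N else 0%nat)) (fun j => if Nat.eqb j i then x i ^ N else 1)).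
    rewrite rprod_change by auto. rewrite (rprod_ext k _ (fun _ => 1)). rewrite rprod_ones; ring.
    intros j _; destruct (Nat.eqb j i); auto. intros j _; destruct (Nat.eqb_spec j i); [subst j; auto|auto]. }
  rewrite Emono in H3. rewrite H3.
  assert (Ef : rprod k (fun j => INR (fact (m j))) = INR (fact N)).
  { unfold m. rewrite (rprod_ext k _ (fun j => if Nat.eqb j i then INR (fact N) else 1)).
    rewrite rprod_change by auto. rewrite (rprod_ext k _ (fun _ => 1)). rewrite rprod_ones; ring.
    intros j _; destruct (Nat.eqb j i); auto. intros j _; destruct (Nat.eqb_spec j i); [subst j; auto|auto]. }
  rewrite Ef. unfold Rdiv. rewrite Rinv_r, Rmult_1_l by (apply not_0_INR, fact_neq_0).
  unfold Pevent. apply lsum_map_ext. intros p Hp. apply paths_in in Hp. destruct Hp as [Hl Hk].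
  assert (EP : forallb (fun j => Nat.eqb (visits p j) (m j)) (seq 0 k) = forallb (fun x => Nat.eqb x i) p).
  2:{ rewrite EP; auto. }
  destruct (forallb (fun x => Nat.eqb x i) p) eqn:E2.
  - rewrite forallb_forall in E2. apply forallb_forall. intros j Hj. apply in_seq in Hj. apply Nat.eqb_eq.
    unfold m. destruct (Nat.eqb_spec j i).
    + subst j. rewrite visits_all; auto. intros x Hx. apply Nat.eqb_eq; auto.
    + unfold visits. apply count_occ_not_In. intros Hin. apply n. apply Nat.eqb_eq. apply E2; auto.
  - destruct (forallb (fun i0 => Nat.eqb (visits p i0) (m i0)) (seq 0 k)) eqn:E1; auto.
    exfalso. assert (forall x, In x p -> x = i).
    { intros x Hx. destruct (Nat.eq_dec x i); auto. exfalso. rewrite forallb_forall in E1.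
      assert (Hxk : (x < k)%nat) by auto. specialize (E1 x ltac:(apply in_seq; lia)). apply Nat.eqb_eq in E1.
      unfold m in E1. destruct (Nat.eqb_spec x i); [lia|]. unfold visits in E1. apply (count_occ_In Nat.eq_dec) in Hx. lia. }
    assert (forallb (fun x => Nat.eqb x i) p = true). { apply forallb_forall. intros x Hx. apply Nat.eqb_eq; auto. }
    congruence. Qed.

From Coquelicot Require Import Compactness.

Fixpoint toT (n off : nat) (x : vec) : Tn n R :=
  match n with O => tt | S n' => (x off, toT n' (S off) x) end.

Fixpoint ofT (n off : nat) : Tn n R -> vec :=
  match n return Tn n R -> vec with
  | O => fun _ _ => 0
  | S n' => fun t => let (a, t') := t in fun i => if Nat.eqb i off then a else ofT n' (S off) t' i
  end.

Fixpoint cstT (n : nat) (c : R) : Tn n R := match n with O => tt | S n' => (c, cstT n' c) end.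

Lemma ofT_toT n off x i : (off <= i < off + n)%nat -> ofT n off (toT n off x) i = x i.
Proof. revert off; induction n; intros off H; simpl. lia. destruct (Nat.eqb_spec i off). subst; auto. apply IHn. lia. Qed.

Lemma bounded_toT n off x : (forall i, (off <= i < off + n)%nat -> 0 <= x i <= 1) -> bounded_n n (cstT n 0) (cstT n 1) (toT n off x).
Proof. revert off; induction n; intros off H; simpl; auto. split. apply H; lia. apply IHn. intros; apply H; lia. Qed.

Lemma bounded_ofT n off t : bounded_n n (cstT n 0) (cstT n 1) t -> forall i, (off <= i < off + n)%nat -> 0 <= ofT n off t i <= 1.
Proof. revert off; induction n; intros off H i Hi; simpl. lia. destruct t as [a t']. simpl in H. destruct H as [H1 H2].
  destruct (Nat.eqb_spec i off); auto. apply IHn; auto. lia. Qed.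

Lemma close_ofT n off d x t : close_n n d x t -> forall i, (off <= i < off + n)%nat -> Rabs (ofT n off x i - ofT n off t i) < d.
Proof. revert off; induction n; intros off H i Hi; simpl. lia. destruct x as [a x']; destruct t as [b t']. simpl in H. destruct H as [H1 H2].
  destruct (Nat.eqb_spec i off); auto. apply IHn; auto. lia. Qed.

Definition UC_on k (f : vec -> R) := forall eps, 0 < eps -> exists d, 0 < d /\ forall x y,
  (forall i, (i < k)%nat -> 0 <= x i <= 1) -> (forall i, (i < k)%nat -> 0 <= y i <= 1) ->
  (forall i, (i < k)%nat -> Rabs (x i - y i) < d) -> Rabs (f x - f y) < eps.

Lemma cont_UC k f : continuous_k k f -> UC_on k f.
Proof. intros Hf eps He.
  assert (Hd : forall t : Tn k R, { d : R | 0 < d /\ forall y, (forall i, (i < k)%nat -> Rabs (y i - ofT k 0 t i) < d) -> Rabs (f y - f (ofT k 0 t)) < eps / 2 }).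
  { intros t. apply constructive_indefinite_description. apply Hf. lra. }
  set (delta := fun t => mkposreal (proj1_sig (Hd t) / 2) ltac:(pose proof (proj1 (proj2_sig (Hd t))); lra)).
  destruct (compactness_value k (cstT k 0) (cstT k 1) delta) as [d Hc].
  exists d. split. apply cond_pos. intros x y Hx Hy Hxy.
  specialize (Hc (toT k 0 x) (bounded_toT k 0 x ltac:(intros; apply Hx; lia))).
  apply NNPP. intros Hneg. apply Hc. intros [t [Ht1 [Ht2 Ht3]]]. apply Hneg.
  pose proof (proj1 (proj2_sig (Hd t))) as Hdt. pose proof (proj2 (proj2_sig (Hd t))) as Hcont.
  set (dt := proj1_sig (Hd t)) in *.
  assert (Hdelta : pos (delta t) = dt / 2) by (unfold delta; simpl; auto).
  rewrite Hdelta in Ht2, Ht3.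
  assert (Hxt : forall i, (i < k)%nat -> Rabs (x i - ofT k 0 t i) < dt / 2).
  { intros i Hi. rewrite <- (ofT_toT k 0 x i) by lia. apply close_ofT with (n := k); auto; lia. }
  assert (H1 : Rabs (f x - f (ofT k 0 t)) < eps / 2). { apply Hcont. intros i Hi. specialize (Hxt i Hi). lra. }
  assert (H2 : Rabs (f y - f (ofT k 0 t)) < eps / 2).
  { apply Hcont. intros i Hi. specialize (Hxt i Hi). specialize (Hxy i Hi).
    replace (y i - ofT k 0 t i) with ((y i - x i) + (x i - ofT k 0 t i)) by ring.
    eapply Rle_lt_trans. apply Rabs_triang. rewrite <- Rabs_Ropp in Hxy. replace (- (x i - y i)) with (y i - x i) in Hxy by ring. lra. }
  replace (f x - f y) with ((f x - f (ofT k 0 t)) - (f y - f (ofT k 0 t))) by ring.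
  eapply Rle_lt_trans. apply Rabs_triang. rewrite Rabs_Ropp. lra. Qed.

Lemma UC_bounded k f : UC_on k f -> exists B, 0 <= B /\ forall x, (forall i, (i < k)%nat -> 0 <= x i <= 1) -> Rabs (f x) <= B.
Proof. intros Hf. destruct (Hf 1 ltac:(lra)) as [d [Hd H]].
  destruct (INR_archimed d 1 Hd) as [R HR]. assert (HR0 : (1 <= R)%nat). { destruct R. simpl in HR. lra. lia. }
  assert (HRp : 0 < INR R) by (apply lt_0_INR; lia).
  exists (Rabs (f (fun _ => 0)) + INR R). split. pose proof (Rabs_pos (f (fun _ => 0))). pose proof (pos_INR R). lra.
  intros x Hx.
  assert (Step : forall j, (j <= R)%nat -> Rabs (f (fun i => INR j / INR R * x i) - f (fun _ => 0)) <= INR j).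
  { induction j; intros Hj.
    - simpl. replace (fun i => 0 / INR R * x i) with (fun _ : nat => 0). rewrite Rminus_diag_eq, Rabs_R0 by auto. lra.
      apply functional_extensionality; intros; unfold Rdiv; ring.
    - specialize (IHj ltac:(lia)).
      assert (Hin : forall j', (j' <= R)%nat -> forall i, (i < k)%nat -> 0 <= INR j' / INR R * x i <= 1).
      { intros j' Hj' i Hi. destruct (Hx i Hi). assert (INR j' <= INR R) by (apply le_INR; auto). pose proof (pos_INR j').
        assert (0 <= INR j' / INR R <= 1). { split. apply Rmult_le_pos; auto. left; apply Rinv_0_lt_compat; auto.
          apply Rmult_le_reg_r with (INR R); auto. unfold Rdiv. rewrite Rmult_assoc, Rinv_l by lra. lra. } nra. }
      assert (Hc : Rabs (f (fun i => INR (S j) / INR R * x i) - f (fun i => INR j / INR R * x i)) < 1).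
      { apply H; try (apply Hin; lia). intros i Hi. rewrite S_INR.
        replace ((INR j + 1) / INR R * x i - INR j / INR R * x i) with (x i / INR R) by (field; lra).
        destruct (Hx i Hi). rewrite Rabs_pos_eq by (apply Rmult_le_pos; auto; left; apply Rinv_0_lt_compat; auto).
        apply Rmult_lt_reg_r with (INR R); auto. unfold Rdiv. rewrite Rmult_assoc, Rinv_l by lra. lra. }
      pose proof (S_INR j). replace (f (fun i => INR (S j) / INR R * x i) - f (fun _ => 0)) with
        ((f (fun i => INR (S j) / INR R * x i) - f (fun i => INR j / INR R * x i)) + (f (fun i => INR j / INR R * x i) - f (fun _ => 0))) by ring.
      eapply Rle_trans. apply Rabs_triang. lra. }
  specialize (Step R (le_n _)). replace (fun i => INR R / INR R * x i) with x in Step.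
  pose proof (Rabs_triang_inv (f x) (f (fun _ => 0))). lra.
  apply functional_extensionality; intros; field; lra. Qed.

Definition hfun k (L : nat -> mat) (a b : nat) (f : vec -> R) (x : nat) : R :=
  lsum (map (fun r => trans L a x r * f (occ (a + b) (repeat x a ++ r))) (paths k b)).

Lemma Ex_lastfun k q L n h : (1 <= n)%nat -> Ex k q L n (fun p => h (last p 0%nat)) = rsum k (fun x => Pn k q L n x * h x).
Proof. intros Hn. rewrite (Ex_last_decomp k q L n (fun x _ => h x)) by auto. apply rsum_ext. intros x _.
  unfold Pn. rewrite Rmult_comm, <- Ex_scal. apply Ex_ext. intros; destruct (Nat.eqb _ _); ring. Qed.

Lemma lsum_trans_bound k L j x b (F : list nat -> R) B : goodL k L -> (1 <= j)%nat -> (x < k)%nat ->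
  (forall r, In r (paths k b) -> Rabs (F r) <= B) ->
  Rabs (lsum (map (fun r => trans L j x r * F r) (paths k b))) <= B.
Proof. intros HL Hj Hx H. eapply Rle_trans. apply lsum_map_abs.
  apply Rle_trans with (lsum (map (fun r => B * trans L j x r) (paths k b))).
  apply lsum_map_le. intros r Hr. rewrite Rabs_mult, Rabs_pos_eq. rewrite Rmult_comm. apply Rmult_le_compat_r; auto.
  apply trans_nonneg with k; auto. apply paths_in in Hr. apply Hr. apply paths_in in Hr. apply trans_nonneg with k; auto. apply Hr.
  rewrite lsum_map_scal, trans_sum; auto. lra. Qed.

Lemma prefix_approx k q L f a b eps : goodL k L -> stochastic_vec k q -> (1 <= a)%nat ->
  (forall p r, In p (paths k a) -> In r (paths k b) ->
     Rabs (f (occ (a + b) (p ++ r)) - f (occ (a + b) (repeat (last p 0%nat) a ++ r))) <= eps) ->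
  Rabs (Ex k q L (a + b) (fun p => f (occ (a + b) p)) - rsum k (fun x => Pn k q L a x * hfun k L a b f x)) <= eps.
Proof. intros HL Hq Ha H. rewrite Ex_split by auto. rewrite <- (Ex_lastfun k q L a (hfun k L a b f)) by auto.
  rewrite <- Ex_minus. apply Ex_bound; auto. intros p Hp. unfold hfun. rewrite <- lsum_map_minus.
  rewrite (lsum_map_ext _ _ (fun r => trans L a (last p 0%nat) r * (f (occ (a + b) (p ++ r)) - f (occ (a + b) (repeat (last p 0%nat) a ++ r))))).
  2:{ intros; ring. }
  apply lsum_trans_bound; auto. apply (last_paths k a p); auto. Qed.

Lemma Pn_stat k G mu Kt n x : is_generator k G -> goodL k Kt -> stochastic_vec k mu ->
  (forall j, (j < k)%nat -> rsum k (fun i => mu i * G i j) = 0) ->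
  (forall n, (1 <= n)%nat -> forall i j, (i < k)%nat -> (j < k)%nat -> mmul k (Amat G n) (Kt n) i j = idm i j) ->
  (1 <= n)%nat -> (x < k)%nat -> Pn k mu Kt n x = mu x.
Proof. intros HG HL Hmu HmuG HK Hn Hx. revert x Hx. induction Hn; intros x Hx.
  - unfold Pn. rewrite Ex_front. simpl paths. rewrite <- (rsum_ind k x mu Hx). apply rsum_ext. intros y _. simpl.
    destruct (Nat.eqb y x); ring.
  - rewrite Pn_rec by (auto; lia). rewrite (rsum_ext _ _ (fun i => mu i * Kt m i x)).
    2:{ intros i Hi. rewrite IHHn; auto. }
    apply (Kt_stat k G m (Kt m) mu); auto. Qed.

Lemma rsum_shift b e j : rsum (S b) (fun t => e (j + t)%nat) = e j + rsum b (fun t => e (S j + t)%nat).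
Proof. induction b. simpl. rewrite Nat.add_0_r. ring. change (rsum (S (S b)) (fun t => e (j + t)%nat)) with (rsum (S b) (fun t => e (j + t)%nat) + e (j + S b)%nat).
  rewrite IHb. simpl. replace (j + S b)%nat with (S (j + b)) by lia. ring. Qed.

Lemma TV_trans k L L' (e : nat -> R) j x b : goodL k L -> goodL k L' -> (1 <= j)%nat -> (x < k)%nat ->
  (forall s, (j <= s)%nat -> forall x, (x < k)%nat -> rsum k (fun y => Rabs (L s x y - L' s x y)) <= e s) ->
  lsum (map (fun r => Rabs (trans L j x r - trans L' j x r)) (paths k b)) <= rsum b (fun t => e (j + t)%nat).
Proof. intros HL HL'. revert j x; induction b; intros j x Hj Hx He.
  - simpl. rewrite Rminus_diag_eq, Rabs_R0 by auto. lra.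
  - rewrite rsum_shift. rewrite lsum_paths_S. simpl trans.
    apply Rle_trans with (rsum k (fun y => Rabs (L j x y - L' j x y) * 1 + L' j x y * rsum b (fun t => e (S j + t)%nat))).
    + apply rsum_le. intros y Hy.
      rewrite (lsum_map_ext _ _ (fun r => Rabs ((L j x y - L' j x y) * trans L (S j) y r + L' j x y * (trans L (S j) y r - trans L' (S j) y r)))) by (intros; f_equal; ring).
      eapply Rle_trans. apply lsum_map_le. intros r Hr. apply Rabs_triang. rewrite lsum_map_plus.
      apply Rplus_le_compat.
      * rewrite (lsum_map_ext _ _ (fun r => Rabs (L j x y - L' j x y) * trans L (S j) y r)).
        rewrite lsum_map_scal, trans_sum; auto; lra. intros r Hr. rewrite Rabs_mult, (Rabs_pos_eq (trans _ _ _ _)); auto.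
        apply trans_nonneg with k; auto. apply paths_in in Hr; apply Hr.
      * rewrite (lsum_map_ext _ _ (fun r => L' j x y * Rabs (trans L (S j) y r - trans L' (S j) y r))).
        rewrite lsum_map_scal. apply Rmult_le_compat_l. apply (HL' j Hj); auto. apply IHb; auto. intros s Hs; apply He; lia.
        intros r Hr. rewrite Rabs_mult, Rabs_pos_eq; auto. apply (HL' j Hj); auto.
    + rewrite rsum_plus, rsum_scal_r, rsum_scal_r, (proj2 (HL' j Hj) x Hx). specialize (He j (le_n _) x Hx).
      lra. Qed.

Lemma tail_sum a b : (2 <= a)%nat -> rsum b (fun t => / INR (a + t) ^ 2) <= / INR (a - 1) - / INR (a - 1 + b).
Proof. intros Ha. induction b. simpl. rewrite Nat.add_0_r. lra.
  change (rsum (S b) (fun t => / INR (a + t) ^ 2)) with (rsum b (fun t => / INR (a + t) ^ 2) + / INR (a + b) ^ 2). assert (Hp : 0 < INR (a - 1 + b)) by (apply lt_0_INR; lia).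
  assert (E : INR (a + b) = INR (a - 1 + b) + 1) by (rewrite <- S_INR; f_equal; lia).
  assert (E2 : INR (a - 1 + S b) = INR (a - 1 + b) + 1) by (rewrite <- S_INR; f_equal; lia).
  rewrite E, E2. set (u := INR (a - 1 + b)) in *.
  assert (/ (u + 1) ^ 2 <= / u - / (u + 1)).
  { replace (/ u - / (u + 1)) with (/ (u * (u + 1))) by (field; lra). apply Rinv_le_contravar.
    apply Rmult_lt_0_compat; lra. simpl. nra. }
  lra. Qed.

Lemma visits_app l1 l2 i : visits (l1 ++ l2) i = (visits l1 i + visits l2 i)%nat.
Proof. unfold visits. apply count_occ_app. Qed.

Lemma occ_range n l i : (1 <= n)%nat -> length l = n -> 0 <= occ n l i <= 1.
Proof. intros Hn Hl. unfold occ. assert (0 < INR n) by (apply lt_0_INR; lia).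
  assert (INR (visits l i) <= INR n) by (apply le_INR; rewrite <- Hl; apply visits_le).
  pose proof (pos_INR (visits l i)). split. apply Rmult_le_pos; auto. left; apply Rinv_0_lt_compat; auto.
  apply Rmult_le_reg_r with (INR n); auto. unfold Rdiv. rewrite Rmult_assoc, Rinv_l by lra. lra. Qed.

Lemma occ_close n a p w r d : (1 <= n)%nat -> length p = a -> length w = a -> (INR a < INR n * d) ->
  forall i, Rabs (occ n (p ++ r) i - occ n (w ++ r) i) < d.
Proof. intros Hn Hp Hw Had i. unfold occ. rewrite !visits_app, !plus_INR.
  assert (0 < INR n) by (apply lt_0_INR; lia).
  replace ((INR (visits p i) + INR (visits r i)) / INR n - (INR (visits w i) + INR (visits r i)) / INR n)
    with ((INR (visits p i) - INR (visits w i)) / INR n) by (field; lra).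
  unfold Rdiv. rewrite Rabs_mult, (Rabs_pos_eq (/ INR n)) by (left; apply Rinv_0_lt_compat; auto).
  assert (INR (visits p i) <= INR a) by (apply le_INR; rewrite <- Hp; apply visits_le).
  assert (INR (visits w i) <= INR a) by (apply le_INR; rewrite <- Hw; apply visits_le).
  pose proof (pos_INR (visits p i)). pose proof (pos_INR (visits w i)).
  assert (Rabs (INR (visits p i) - INR (visits w i)) <= INR a) by (apply Rabs_le; lra).
  apply Rmult_lt_reg_r with (INR n); auto. rewrite Rmult_assoc, Rinv_l, Rmult_1_r by lra. lra. Qed.

Lemma part2_gen k G mu M Kt p0 (nu : (vec -> R) -> R) :
  is_generator k G -> (forall i j, (i < k)%nat -> (j < k)%nat -> G i j <> 0) ->
  stochastic_vec k mu -> (forall j, (j < k)%nat -> rsum k (fun i => mu i * G i j) = 0) ->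
  (forall n, (M < n)%nat -> forall i j, (i < k)%nat -> (j < k)%nat -> 0 <= idm i j + G i j / INR n) ->
  (forall n, (1 <= n)%nat -> forall i j, (i < k)%nat -> (j < k)%nat ->
     mmul k (Amat G n) (Kt n) i j = idm i j /\ mmul k (Kt n) (Amat G n) i j = idm i j) ->
  stochastic_vec k p0 ->
  (forall f, continuous_k k f -> Un_cv (Eocc k p0 (Kker G M) f) (nu f)) ->
  forall f, continuous_k k f -> Un_cv (Eocc k mu Kt f) (nu f).
Proof. intros HG HGnz Hmu HmuG HM HK Hp0 Hnu f Hf eps He.
  assert (HKg := Kt_good k G Kt HG HK). assert (HLg := Kker_good k G M HG HM).
  assert (UC := cont_UC k f Hf). destruct (UC_bounded k f UC) as [Bf [HBf0 HBf]].
  destruct (part1_gen k G M Kt HG HK) as [C [HC0 HC]].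
  set (e' := eps / 5). assert (He' : 0 < e') by (unfold e'; lra).
  destruct (UC e' He') as [d [Hd HUC]].
  assert (Hmix := mixing k G M p0 mu HG HGnz Hp0 Hmu HmuG HM).
  destruct (Hmix (e' / (Bf + 1)) ltac:(apply Rdiv_lt_0_compat; lra)) as [A1 HA1].
  destruct (INR_archimed e' (Bf * INR k * C) He') as [A2 HA2].
  set (a := max (max A1 (S A2)) 2).
  destruct (Hnu f Hf e' He') as [N3 HN3].
  destruct (INR_archimed d (INR a) Hd) as [N4 HN4].
  exists (max (max N3 N4) (S a)). intros n Hn.
  assert (Ha2 : (2 <= a)%nat) by (unfold a; lia).
  set (b := (n - a)%nat). assert (Hnab : n = (a + b)%nat) by (unfold b; lia).
  assert (Hn1 : (1 <= n)%nat) by lia.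
  assert (Hnd : INR a < INR n * d). { assert (INR N4 <= INR n) by (apply le_INR; lia). nra. }
  set (hT := hfun k (Kker G M) a b f). set (hZ := hfun k Kt a b f).
  assert (Hclose : forall q L, goodL k L -> stochastic_vec k q ->
     Rabs (Eocc k q L f n - rsum k (fun x => Pn k q L a x * hfun k L a b f x)) <= e').
  { intros q L HL Hq. unfold Eocc. fold (Ex k q L n (fun p => f (occ n p))). rewrite Hnab.
    apply prefix_approx; auto; try lia. intros p r Hp Hr. left.
    destruct (paths_in k a p Hp) as [Hlp _]. destruct (paths_in k b r Hr) as [Hlr _].
    apply HUC.
    - intros i _. apply occ_range. lia. rewrite length_app; lia.
    - intros i _. apply occ_range. lia. rewrite length_app, repeat_length; lia.
    - intros i _. rewrite <- Hnab. apply occ_close with a; auto. apply repeat_length. }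
  assert (F1 := Hclose mu Kt HKg Hmu). assert (F2 := Hclose p0 (Kker G M) HLg Hp0).
  rewrite (rsum_ext k (fun x => Pn k mu Kt a x * hfun k Kt a b f x) (fun x => mu x * hZ x)) in F1.
  2:{ intros x Hx. rewrite (Pn_stat k G mu Kt a x); auto. intros; apply HK; auto. lia. }
  assert (HfB : forall x r, (x < k)%nat -> In r (paths k b) -> Rabs (f (occ (a + b) (repeat x a ++ r))) <= Bf).
  { intros x r Hx Hr. apply HBf. intros i _. destruct (paths_in k b r Hr) as [Hlr _]. apply occ_range. lia. rewrite length_app, repeat_length; lia. }
  assert (HhT : forall x, (x < k)%nat -> Rabs (hT x) <= Bf).
  { intros x Hx. unfold hT, hfun. apply lsum_trans_bound; auto; try lia; intros r Hr; apply HfB; auto. }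
  assert (Hdiff : forall x, (x < k)%nat -> Rabs (hT x - hZ x) <= Bf * (INR k * C / INR (a - 1))).
  { intros x Hx. unfold hT, hZ, hfun. rewrite <- lsum_map_minus. eapply Rle_trans. apply lsum_map_abs.
    apply Rle_trans with (lsum (map (fun r => Bf * Rabs (trans (Kker G M) a x r - trans Kt a x r)) (paths k b))).
    { apply lsum_map_le. intros r Hr. replace (trans (Kker G M) a x r * f (occ (a + b) (repeat x a ++ r)) - trans Kt a x r * f (occ (a + b) (repeat x a ++ r)))
        with ((trans (Kker G M) a x r - trans Kt a x r) * f (occ (a + b) (repeat x a ++ r))) by ring.
      rewrite Rabs_mult, Rmult_comm. apply Rmult_le_compat_r. apply Rabs_pos. apply HfB; auto. }
    rewrite lsum_map_scal. apply Rmult_le_compat_l; auto.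
    eapply Rle_trans. apply (TV_trans k (Kker G M) Kt (fun s => INR k * C / INR s ^ 2)); auto; try lia.
    - intros s Hs y Hy. replace (INR k * C / INR s ^ 2) with (rsum k (fun _ => C / INR s ^ 2)) by (rewrite rsum_const; unfold Rdiv; ring).
      apply rsum_le. intros j Hj. rewrite <- Rabs_Ropp. replace (- (Kker G M s y j - Kt s y j)) with (Kt s y j - Kker G M s y j) by ring.
      apply HC; auto; lia.
    - rewrite (rsum_ext _ _ (fun t => INR k * C * / INR (a + t) ^ 2)) by (intros; unfold Rdiv; auto).
      rewrite rsum_scal. unfold Rdiv. apply Rmult_le_compat_l. apply Rmult_le_pos; auto; apply pos_INR.
      pose proof (tail_sum a b Ha2). assert (0 < / INR (a - 1 + b)) by (apply Rinv_0_lt_compat, lt_0_INR; lia). lra. }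
  assert (HmixA : rsum k (fun x => Rabs (Pn k p0 (Kker G M) a x - mu x)) < e' / (Bf + 1)).
  { specialize (HA1 a ltac:(unfold a; lia)). unfold Rdist in HA1. rewrite Rminus_0_r in HA1.
    rewrite Rabs_pos_eq in HA1 by (apply rsum_nonneg; intros; apply Rabs_pos). auto. }
  assert (HA2' : Bf * (INR k * C / INR (a - 1)) < e').
  { assert (INR A2 <= INR (a - 1)) by (apply le_INR; unfold a; lia). assert (0 < INR (a - 1)) by (apply lt_0_INR; lia).
    replace (Bf * (INR k * C / INR (a - 1))) with (Bf * INR k * C / INR (a - 1)) by (unfold Rdiv; ring).
    apply Rmult_lt_reg_r with (INR (a - 1)); auto. unfold Rdiv. rewrite Rmult_assoc, Rinv_l by lra. nra. }
  assert (F3 : Rabs (rsum k (fun x => Pn k p0 (Kker G M) a x * hT x) - rsum k (fun x => mu x * hZ x)) < 2 * e').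
  { rewrite <- rsum_minus. eapply Rle_lt_trans. apply rsum_abs.
    apply Rle_lt_trans with (rsum k (fun x => Rabs (Pn k p0 (Kker G M) a x - mu x) * Bf + mu x * (Bf * (INR k * C / INR (a - 1))))).
    - apply rsum_le. intros x Hx. replace (Pn k p0 (Kker G M) a x * hT x - mu x * hZ x) with ((Pn k p0 (Kker G M) a x - mu x) * hT x + mu x * (hT x - hZ x)) by ring.
      eapply Rle_trans. apply Rabs_triang. rewrite !Rabs_mult, (Rabs_pos_eq (mu x)) by (apply Hmu; auto).
      apply Rplus_le_compat. apply Rmult_le_compat_l. apply Rabs_pos. auto. apply Rmult_le_compat_l. apply Hmu; auto. auto.
    - rewrite rsum_plus, rsum_scal_r, rsum_scal_r. destruct Hmu as [_ Hm1]. rewrite Hm1.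
      assert (rsum k (fun x => Rabs (Pn k p0 (Kker G M) a x - mu x)) * Bf <= e' / (Bf + 1) * Bf) by (apply Rmult_le_compat_r; lra).
      assert (e' / (Bf + 1) * Bf <= e'). { replace (e' / (Bf + 1) * Bf) with (e' * (Bf / (Bf + 1))) by (field; lra).
        assert (Bf / (Bf + 1) <= 1). { apply Rmult_le_reg_r with (Bf + 1). lra. unfold Rdiv. rewrite Rmult_assoc, Rinv_l by lra. lra. }
        nra. }
      lra. }
  specialize (HN3 n ltac:(lia)). unfold Rdist in *.
  replace (Eocc k mu Kt f n - nu f) with ((Eocc k mu Kt f n - rsum k (fun x => mu x * hZ x))
      - (rsum k (fun x => Pn k p0 (Kker G M) a x * hT x) - rsum k (fun x => mu x * hZ x))
      - (Eocc k p0 (Kker G M) f n - rsum k (fun x => Pn k p0 (Kker G M) a x * hT x))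
      + (Eocc k p0 (Kker G M) f n - nu f)) by ring.
  fold hT in F2.
  assert (Rabs ((Eocc k mu Kt f n - rsum k (fun x => mu x * hZ x))
      - (rsum k (fun x => Pn k p0 (Kker G M) a x * hT x) - rsum k (fun x => mu x * hZ x))
      - (Eocc k p0 (Kker G M) f n - rsum k (fun x => Pn k p0 (Kker G M) a x * hT x))
      + (Eocc k p0 (Kker G M) f n - nu f)) <= Rabs (Eocc k mu Kt f n - rsum k (fun x => mu x * hZ x))
      + Rabs (rsum k (fun x => Pn k p0 (Kker G M) a x * hT x) - rsum k (fun x => mu x * hZ x))
      + Rabs (Eocc k p0 (Kker G M) f n - rsum k (fun x => Pn k p0 (Kker G M) a x * hT x))
      + Rabs (Eocc k p0 (Kker G M) f n - nu f)).
  { eapply Rle_trans. apply Rabs_triang. apply Rplus_le_compat_r. eapply Rle_trans. unfold Rminus at 1. apply Rabs_triang.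
    rewrite Rabs_Ropp. apply Rplus_le_compat_r. eapply Rle_trans. apply Rabs_triang. rewrite Rabs_Ropp. lra. }
  unfold e' in *. lra. Qed.

Theorem mainTheorem8
  (k : nat) (G : mat) (mu : vec) (M : nat) (Kt : nat -> mat)
  (p0 : vec) (nu : (vec -> R) -> R)
  (HG : is_generator k G)
  (HGnz : forall i j, (i < k)%nat -> (j < k)%nat -> G i j <> 0)
  (Hmu : stochastic_vec k mu)
  (HmuG : forall j, (j < k)%nat -> rsum k (fun i => mu i * G i j) = 0)
  (HM : forall n, (M < n)%nat -> forall i j, (i < k)%nat -> (j < k)%nat ->
          0 <= idm i j + G i j / INR n)
  (HKt : forall n, (1 <= n)%nat -> forall i j, (i < k)%nat -> (j < k)%nat ->
          mmul k (fun a b => idm a b - G a b / INR n) (Kt n) i j = idm i j /\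
          mmul k (Kt n) (fun a b => idm a b - G a b / INR n) i j = idm i j)
  (Hp0 : stochastic_vec k p0)
  (Hnu : forall f, continuous_k k f ->
          Un_cv (Eocc k p0 (Kker G M) f) (nu f)) :
  (exists C, forall n, (1 <= n)%nat -> forall i j, (i < k)%nat -> (j < k)%nat ->
      Rabs (Kt n i j - Kker G M n i j) <= C / (INR n ^ 2)) /\
  (forall f, continuous_k k f -> Un_cv (Eocc k mu Kt f) (nu f)) /\
  (forall (m : nat -> nat) (N : nat),
      N = fold_right plus 0%nat (map m (seq 0 k)) -> (0 < N)%nat ->
      nu (monomial k m) =
        rprod k (fun i => INR (fact (m i))) / INR (fact N) *
        Pevent k mu Kt N
          (fun p => forallb (fun i => Nat.eqb (visits p i) (m i)) (seq 0 k))) /\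
  (forall (i N : nat), (i < k)%nat -> (0 < N)%nat ->
      nu (fun x => x i ^ N) =
        Pevent k mu Kt N (fun p => forallb (fun x => Nat.eqb x i) p)).
Proof.
  assert (H3 := part3_gen k G mu M Kt p0 nu HG HGnz Hmu HmuG HM HKt Hp0 Hnu).
  split; [|split; [|split]].
  - destruct (part1_gen k G M Kt HG HKt) as [C [_ HC]]. exists C. exact HC.
  - exact (part2_gen k G mu M Kt p0 nu HG HGnz Hmu HmuG HM HKt Hp0 Hnu).
  - exact H3.
  - exact (part4_from3 k mu Kt nu H3).
Qed.
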